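(* Let $\mathcal H$ be a separable complex Hilbert space with canonical orthonormal basis $\{e_n\}$ and $S_2$ the Hilbert–Schmidt operators with $\langle\eta,\tau\rangle_2=\operatorname{tr}(\eta^*\tau)$. For a positive definite operator $A\in\mathcal B(S_2)$ there exist selfadjoint operators $b_{11}$ and $a_{nm}$ ($n,m\in\mathbb N$) in $\mathcal B(\mathcal H)$ such that $b_{11},a_{11},a_{22}$ are positive definite and $$A\eta=b_{11}\eta a_{11}+\sum_{\substack{n,m\\(n,m)\ne(1,1)}}\hat\varepsilon_{nm}\eta\,a_{nm},\qquad \eta\in S_2.$$
   Context: $\varepsilon_{nm}=|e_n\rangle\langle e_m|$ (so $\varepsilon_{nm}f=\langle e_m,f\rangle e_n$) and $\hat\varepsilon_{nm}=\frac{1+i}{2}\varepsilon_{nm}+\frac{1-i}{2}\varepsilon_{mn}$. A bounded operator $T$ on a Hilbert space is positive definite if $\inf\{\langle x,Tx\rangle:\|x\|=1\}>0$. *)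

(* Defs.v *)
From Stdlib Require Import Reals Arith.
From Coquelicot Require Import Coquelicot.
Open Scope R_scope.

(* Concrete model of the separable (infinite-dim.) complex Hilbert space H:
   H = l^2(nat; C); canonical orthonormal basis e n.  Indices are 0-based:
   the paper's e_1, e_2 are our e 0, e 1. *)
Definition vec := nat -> C.

Definition vadd (x y : vec) : vec := fun k => Cplus (x k) (y k).
Definition vsub (x y : vec) : vec := fun k => Cminus (x k) (y k).
Definition vscal (a : C) (x : vec) : vec := fun k => Cmult a (x k).
Definition vzero : vec := fun _ => RtoC 0.

Definition l2 (x : vec) : Prop := ex_series (fun n => (Cmod (x n)) ^ 2).

(* sum of a complex series (meaningful when it converges) *)
Definition CSeries (a : nat -> C) : C :=
  (Series (fun n => Re (a n)), Series (fun n => Im (a n))).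

Definition inner (x y : vec) : C := CSeries (fun n => Cmult (Cconj (x n)) (y n)).
Definition norm2 (x : vec) : R := sqrt (Series (fun n => (Cmod (x n)) ^ 2)).

Definition e (n : nat) : vec := fun k => if Nat.eqb k n then RtoC 1 else RtoC 0.

(* operators on H (only their action on l^2 matters) *)
Definition op := vec -> vec.

Definition bounded_op (T : op) : Prop :=
  (forall x, l2 x -> l2 (T x)) /\
  (forall x y, l2 x -> l2 y -> T (vadd x y) = vadd (T x) (T y)) /\
  (forall a x, l2 x -> T (vscal a x) = vscal a (T x)) /\
  (exists M : R, forall x, l2 x -> norm2 (T x) <= M * norm2 x).

Definition selfadjoint (T : op) : Prop :=
  bounded_op T /\ forall x y, l2 x -> l2 y -> inner (T x) y = inner x (T y).

Definition posdef (T : op) : Prop :=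
  bounded_op T /\
  exists c : R, 0 < c /\
    forall x, l2 x -> norm2 x = 1 ->
      Im (inner x (T x)) = 0 /\ c <= Re (inner x (T x)).

Definition ocomp (S T : op) : op := fun x => S (T x).
Definition oadd (S T : op) : op := fun x => vadd (S x) (T x).
Definition osub (S T : op) : op := fun x => vsub (S x) (T x).
Definition oscal (a : C) (S : op) : op := fun x => vscal a (S x).
Definition ozero : op := fun _ => vzero.

Definition HS (eta : op) : Prop :=
  bounded_op eta /\ ex_series (fun k => (norm2 (eta (e k))) ^ 2).

(* <eta,tau>_2 = tr(eta^* tau) = sum_k <eta e_k, tau e_k> *)
Definition inner2 (eta tau : op) : C := CSeries (fun k => inner (eta (e k)) (tau (e k))).
Definition norm_HS (eta : op) : R := sqrt (Series (fun k => (norm2 (eta (e k))) ^ 2)).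

Definition opS := op -> op.

Definition bounded_opS (A : opS) : Prop :=
  (forall eta, HS eta -> HS (A eta)) /\
  (forall eta tau, HS eta -> HS tau -> forall x, l2 x ->
      A (oadd eta tau) x = oadd (A eta) (A tau) x) /\
  (forall a eta, HS eta -> forall x, l2 x -> A (oscal a eta) x = oscal a (A eta) x) /\
  (exists M : R, forall eta, HS eta -> norm_HS (A eta) <= M * norm_HS eta).

Definition posdefS (A : opS) : Prop :=
  bounded_opS A /\
  exists c : R, 0 < c /\
    forall eta, HS eta -> norm_HS eta = 1 ->
      Im (inner2 eta (A eta)) = 0 /\ c <= Re (inner2 eta (A eta)).

Definition eps (n m : nat) : op := fun f k => if Nat.eqb k n then f m else RtoC 0.

Definition heps (n m : nat) : op :=
  oadd (oscal (Cdiv (Cplus (RtoC 1) Ci) (RtoC 2)) (eps n m))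
       (oscal (Cdiv (Cminus (RtoC 1) Ci) (RtoC 2)) (eps m n)).

Fixpoint osum (N : nat) (F : nat -> op) : op :=
  match N with
  | O => ozero
  | S N' => oadd (osum N' F) (F N')
  end.

Definition partial_sum (a : nat -> nat -> op) (eta : op) (N : nat) : op :=
  osum N (fun n => osum N (fun m =>
    if (Nat.eqb n 0 && Nat.eqb m 0)%bool then ozero
    else ocomp (heps n m) (ocomp eta (a n m)))).

(* Main.v *)
Require Import Defs.
From Stdlib Require Import Reals Arith Lia Lra Psatz FunctionalExtensionality Bool.
From Coquelicot Require Import Coquelicot.
Open Scope R_scope.

Fixpoint rs (N : nat) (a : nat -> R) : R :=
  match N with O => 0 | S N' => rs N' a + a N' end.

Lemma sum_n_rs a N : sum_n a N = rs (S N) a.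
Proof.
  induction N.
  - rewrite sum_O. simpl. rewrite Rplus_0_l. reflexivity.
  - rewrite sum_Sn, IHN. reflexivity.
Qed.

Lemma rs_ext N a b : (forall k, (k < N)%nat -> a k = b k) -> rs N a = rs N b.
Proof. induction N; intros H; simpl; auto. rewrite IHN, H; auto. Qed.

Lemma rs_le N a b : (forall k, a k <= b k) -> rs N a <= rs N b.
Proof. induction N; intros H; simpl. lra. specialize (IHN H). specialize (H N). lra. Qed.

Lemma rs_nonneg N a : (forall k, 0 <= a k) -> 0 <= rs N a.
Proof. induction N; intros H; simpl. lra. specialize (IHN H). specialize (H N). lra. Qed.

Lemma rs_plus N a b : rs N (fun k => a k + b k) = rs N a + rs N b.
Proof. induction N; simpl. ring. rewrite IHN; ring. Qed.

Lemma rs_scal N c a : rs N (fun k => c * a k) = c * rs N a.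
Proof. induction N; simpl. ring. rewrite IHN; ring. Qed.

Lemma rs_mono a N M : (forall k, 0 <= a k) -> (N <= M)%nat -> rs N a <= rs M a.
Proof.
  intros H HNM. induction HNM. lra. simpl. specialize (H m). lra.
Qed.

Lemma rs_fin a N M : (forall k, (N <= k)%nat -> a k = 0) -> (N <= M)%nat -> rs M a = rs N a.
Proof.
  intros H HNM. induction HNM. auto. simpl. rewrite IHHNM, H. ring. lia.
Qed.

Lemma ser_bounded a B : (forall k, 0 <= a k) -> (forall N, rs N a <= B) ->
  ex_series a /\ Series a <= B.
Proof.
  intros H0 HB.
  assert (Hf : ex_finite_lim_seq (sum_n a)).
  { apply ex_finite_lim_seq_incr with B.
    - intros n. rewrite !sum_n_rs. simpl. specialize (H0 (S n)). lra.
    - intros n. rewrite sum_n_rs. auto. }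
  pose proof (Lim_seq_correct' _ Hf) as HL.
  split.
  - exists (real (Lim_seq (sum_n a))). exact HL.
  - unfold Series.
    assert (Hle := is_lim_seq_le (sum_n a) (fun _ => B) _ _ (fun n => ltac:(rewrite sum_n_rs; auto)) HL (is_lim_seq_const B)).
    simpl in Hle. exact Hle.
Qed.

Lemma rs_lim a : ex_series a -> is_lim_seq (fun N => rs N a) (Series a).
Proof.
  intros H. apply Series_correct in H.
  apply is_lim_seq_incr_1.
  apply is_lim_seq_ext with (sum_n a). intros; apply sum_n_rs. exact H.
Qed.

Lemma rs_le_Series a N : (forall k, 0 <= a k) -> ex_series a -> rs N a <= Series a.
Proof.
  intros H0 H. pose proof (rs_lim a H) as HL.
  apply is_lim_seq_incr_n with (N := N) in HL.
  assert (Hle := is_lim_seq_le (fun _ => rs N a) (fun n => rs (n + N) a) _ _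
     (fun n => rs_mono a N (n+N) H0 ltac:(lia)) (is_lim_seq_const _) HL).
  exact Hle.
Qed.

Lemma Series_ge0 a : (forall k, 0 <= a k) -> ex_series a -> 0 <= Series a.
Proof. intros H0 H. apply (rs_le_Series a 0) in H; auto. Qed.

Lemma term_le_Series a k : (forall k, 0 <= a k) -> ex_series a -> a k <= Series a.
Proof.
  intros H0 H. apply Rle_trans with (rs (S k) a).
  - simpl. pose proof (rs_nonneg k a H0). lra.
  - apply rs_le_Series; auto.
Qed.

Lemma Series_fin a N : (forall k, (N <= k)%nat -> a k = 0) -> ex_series a /\ Series a = rs N a.
Proof.
  intros H.
  assert (HL : is_series a (rs N a)).
  { change (is_lim_seq (sum_n a) (rs N a)).
    apply is_lim_seq_ext_loc with (fun _ => rs N a).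
    - exists N. intros n Hn. rewrite sum_n_rs. symmetry. apply rs_fin; auto.
    - apply is_lim_seq_const. }
  split. exists (rs N a); auto. apply is_series_unique; auto.
Qed.

Lemma ex_series_Rle a b : (forall k, 0 <= a k <= b k) -> ex_series b -> ex_series a.
Proof.
  intros H Hb. apply (ex_series_le a b); auto.
  intros n. specialize (H n). unfold norm; simpl. unfold abs; simpl. rewrite Rabs_pos_eq; lra.
Qed.

Lemma ex_series_Rplus a b : ex_series a -> ex_series b -> ex_series (fun k => a k + b k).
Proof. intros. apply (ex_series_plus a b); auto. Qed.

Lemma ex_series_Rscal c a : ex_series a -> ex_series (fun k => c * a k).
Proof. intros. apply (ex_series_scal c a); auto. Qed.

Lemma ex_series_Rext (a b : nat -> R) : (forall n, a n = b n) -> ex_series a -> ex_series b.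
Proof. intros H. apply ex_series_ext; auto. Qed.

Definition tail (a : nat -> R) (N : nat) : nat -> R := fun k => if (k <? N)%nat then 0 else a k.
Definition head (a : nat -> R) (N : nat) : nat -> R := fun k => if (k <? N)%nat then a k else 0.

Lemma head_Series a N : ex_series (head a N) /\ Series (head a N) = rs N a.
Proof.
  destruct (Series_fin (head a N) N) as [H1 H2].
  { intros k Hk. unfold head. destruct (Nat.ltb_spec k N); lia || auto. }
  split; auto. rewrite H2. apply rs_ext. intros k Hk. unfold head.
  destruct (Nat.ltb_spec k N); lia || auto.
Qed.

Lemma tail_ex a N : ex_series a -> ex_series (tail a N).
Proof.
  intros H. destruct (head_Series a N) as [H1 _].
  apply ex_series_Rext with (fun k => a k + (-1) * head a N k).
  - intros k. unfold tail, head. destruct (k <? N)%nat; ring.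
  - apply ex_series_Rplus; auto. apply ex_series_Rscal; auto.
Qed.

Lemma Series_split a N : ex_series a -> Series a = rs N a + Series (tail a N).
Proof.
  intros H. destruct (head_Series a N) as [H1 H2].
  rewrite (Series_ext a (fun k => head a N k + tail a N k)).
  - rewrite Series_plus, H2; auto using tail_ex.
  - intros k. unfold tail, head. destruct (k <? N)%nat; lra.
Qed.

Lemma tail_lim a : ex_series a -> is_lim_seq (fun N => Series (tail a N)) 0.
Proof.
  intros H.
  apply is_lim_seq_ext with (fun N => Series a + (-1) * rs N a).
  - intros N. rewrite (Series_split a N H). ring.
  - replace 0 with (Series a + (-1) * Series a) by ring.
    apply is_lim_seq_plus'. apply is_lim_seq_const.
    apply (is_lim_seq_scal_l _ (-1) (Series a)). apply rs_lim; auto.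
Qed.

Lemma tail_nonneg a N : (forall k, 0 <= a k) -> forall k, 0 <= tail a N k <= a k.
Proof. intros H k. unfold tail. destruct (k <? N)%nat; specialize (H k); lra. Qed.

Lemma quad_disc A W B : 0 <= A -> 0 <= B -> (forall t, 0 <= A * t * t + 2 * W * t + B) -> W * W <= A * B.
Proof.
  intros HA HB H.
  destruct (Req_dec W 0) as [HW|HW]. { subst. nra. }
  destruct (Req_dec A 0) as [HA0|HA0].
  - exfalso. specialize (H (-(B+1)/(2*W))). subst.
    replace (0 * (- (B + 1) / (2 * W)) * (- (B + 1) / (2 * W)) + 2 * W * (- (B + 1) / (2 * W)) + B) with (-1) in H by (field; auto).
    lra.
  - specialize (H (-W/A)).
    replace (A * (- W / A) * (- W / A) + 2 * W * (- W / A) + B) with (B - W*W/A) in H by (field; auto).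
    assert (0 < A) by lra.
    apply Rmult_le_compat_r with (r := A) in H; [|lra].
    replace ((B - W * W / A) * A) with (A*B - W*W) in H by (field; auto). lra.
Qed.

Lemma CS_fin N (a b : nat -> R) :
  (rs N (fun k => a k * b k)) * (rs N (fun k => a k * b k)) <= rs N (fun k => a k ^ 2) * rs N (fun k => b k ^ 2).
Proof.
  apply quad_disc.
  - apply rs_nonneg. intros; apply pow2_ge_0.
  - apply rs_nonneg. intros; apply pow2_ge_0.
  - intros t.
    assert (E : rs N (fun k => (a k * t + b k) ^ 2) =
      rs N (fun k => a k ^ 2) * t * t + 2 * rs N (fun k => a k * b k) * t + rs N (fun k => b k ^ 2)).
    { induction N; cbn [rs]. ring. rewrite IHN. ring. }
    rewrite <- E. apply rs_nonneg. intros; apply pow2_ge_0.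
Qed.

Lemma CS_fin_sqrt N (a b : nat -> R) : (forall k, 0 <= a k) -> (forall k, 0 <= b k) ->
  rs N (fun k => a k * b k) <= sqrt (rs N (fun k => a k ^ 2)) * sqrt (rs N (fun k => b k ^ 2)).
Proof.
  intros Ha Hb. rewrite <- sqrt_mult.
  - rewrite <- (sqrt_square (rs N (fun k => a k * b k))).
    + apply sqrt_le_1_alt. apply CS_fin.
    + apply rs_nonneg. intros; apply Rmult_le_pos; auto.
  - apply rs_nonneg. intros; apply pow2_ge_0.
  - apply rs_nonneg. intros; apply pow2_ge_0.
Qed.

Lemma CS_ser N (a b : nat -> R) : (forall k, 0 <= a k) -> (forall k, 0 <= b k) ->
  ex_series (fun k => a k ^ 2) -> ex_series (fun k => b k ^ 2) ->
  rs N (fun k => a k * b k) <= sqrt (Series (fun k => a k ^ 2)) * sqrt (Series (fun k => b k ^ 2)).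
Proof.
  intros Ha Hb Ea Eb. eapply Rle_trans. apply CS_fin_sqrt; auto.
  apply Rmult_le_compat; try apply sqrt_pos; apply sqrt_le_1_alt; apply rs_le_Series; auto; intros; nra.
Qed.

Lemma ex_series_rs K (c : nat -> nat -> R) : (forall k, ex_series (c k)) ->
  ex_series (fun j => rs K (fun k => c k j)).
Proof.
  intros H. induction K; simpl.
  - exists 0. apply is_series_ext with (fun _ => 0). auto. 
    change (is_lim_seq (sum_n (fun _ : nat => 0)) 0).
    apply is_lim_seq_ext with (fun _ => 0). intros n. rewrite sum_n_rs. induction n; simpl in *; lra.
    apply is_lim_seq_const.
  - apply ex_series_Rplus; auto.
Qed.

Lemma Series_rs K (c : nat -> nat -> R) : (forall k, ex_series (c k)) ->
  Series (fun j => rs K (fun k => c k j)) = rs K (fun k => Series (c k)).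
Proof.
  intros H. induction K; simpl.
  - apply is_series_unique. change (is_lim_seq (sum_n (fun _ : nat => 0)) 0).
    apply is_lim_seq_ext with (fun _ => 0). intros n. rewrite sum_n_rs. induction n; simpl in *; lra.
    apply is_lim_seq_const.
  - rewrite Series_plus; auto. rewrite IHK. auto. apply ex_series_rs; auto.
Qed.

Lemma swap_le (b : nat -> nat -> R) : (forall j k, 0 <= b j k) ->
  (forall j, ex_series (b j)) -> ex_series (fun j => Series (b j)) ->
  (forall k, ex_series (fun j => b j k)) /\ ex_series (fun k => Series (fun j => b j k)) /\
  Series (fun k => Series (fun j => b j k)) <= Series (fun j => Series (b j)).
Proof.
  intros H0 Hr HS.
  assert (Hc : forall k, ex_series (fun j => b j k)).
  { intros k. apply ex_series_Rle with (fun j => Series (b j)); auto.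
    intros j. split; auto. apply term_le_Series; auto. }
  assert (HB : forall K, rs K (fun k => Series (fun j => b j k)) <= Series (fun j => Series (b j))).
  { intros K. rewrite <- (Series_rs K (fun k j => b j k)); auto.
    apply Series_le; auto. intros j. split. apply rs_nonneg; auto. apply rs_le_Series; auto. }
  destruct (ser_bounded (fun k => Series (fun j => b j k)) _ (fun k => Series_ge0 _ (fun j => H0 j k) (Hc k)) HB).
  auto.
Qed.

Lemma rs_lim0 J (u : nat -> nat -> R) : (forall j, is_lim_seq (u j) 0) ->
  is_lim_seq (fun N => rs J (fun j => u j N)) 0.
Proof.
  intros H. induction J; simpl.
  - apply is_lim_seq_const.
  - replace 0 with (0 + 0) by ring. apply is_lim_seq_plus'; auto.
Qed.

Lemma dtail (b : nat -> nat -> R) : (forall j k, 0 <= b j k) ->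
  (forall j, ex_series (b j)) -> ex_series (fun j => Series (b j)) ->
  (forall N, ex_series (fun j => Series (tail (b j) N))) /\
  is_lim_seq (fun N => Series (fun j => Series (tail (b j) N))) 0.
Proof.
  intros H0 Hr HS.
  set (S := fun j => Series (b j)).
  assert (HSt : forall j N, 0 <= Series (tail (b j) N) <= S j).
  { intros j N. split. apply Series_ge0; auto using tail_ex. intros k; apply tail_nonneg; auto.
    apply Series_le; auto. apply tail_nonneg; auto. }
  assert (Hex : forall N, ex_series (fun j => Series (tail (b j) N))).
  { intros N. apply ex_series_Rle with S; auto. }
  split; auto.
  apply is_lim_seq_spec. intros eps.
  assert (HT := tail_lim S HS). apply is_lim_seq_spec in HT.
  destruct (HT (pos_div_2 eps)) as [J HJ]. specialize (HJ J (Nat.le_refl _)).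
  assert (HF := rs_lim0 J (fun j N => Series (tail (b j) N)) (fun j => tail_lim _ (Hr j))).
  apply is_lim_seq_spec in HF. destruct (HF (pos_div_2 eps)) as [N0 HN0].
  exists N0. intros N HN. specialize (HN0 N HN). simpl in *.
  rewrite Rminus_0_r in *.
  rewrite (Series_split _ J (Hex N)).
  assert (Hle : Series (tail (fun j => Series (tail (b j) N)) J) <= Series (tail S J)).
  { apply Series_le. intros k. unfold tail. destruct (k <? J)%nat. lra. apply HSt.
    apply tail_ex; auto. }
  assert (0 <= Series (tail (fun j => Series (tail (b j) N)) J)).
  { apply Series_ge0. intros k; unfold tail; destruct (k <? J)%nat. lra. apply HSt. apply tail_ex; auto. }
  assert (0 <= rs J (fun j => Series (tail (b j) N))). { apply rs_nonneg. intros; apply HSt. }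
  rewrite Rabs_pos_eq in * by lra.
  lra.
Qed.

Ltac cdestr := repeat match goal with z : C |- _ => destruct z end.
Ltac Ceq := cdestr; unfold Cplus, Cmult, Cminus, Copp, Cconj, RtoC, Ci, Cdiv, Cinv in *;
  simpl; apply injective_projections; simpl; field.

Fixpoint csum (N : nat) (g : nat -> C) : C :=
  match N with O => RtoC 0 | S N' => Cplus (csum N' g) (g N') end.

Definition clim (u : nat -> C) (l : C) := is_lim_seq (fun J => Cmod (Cminus (u J) l)) 0.

Lemma lim0_squeeze (u w : nat -> R) : (forall n, 0 <= u n <= w n) -> is_lim_seq w 0 -> is_lim_seq u 0.
Proof. intros H Hw. apply is_lim_seq_le_le with (fun _ => 0) w; auto. apply is_lim_seq_const. Qed.

Lemma lim0_squeeze_ev (u w : nat -> R) N0 : (forall n, (N0 <= n)%nat -> 0 <= u n <= w n) -> is_lim_seq w 0 -> is_lim_seq u 0.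
Proof.
  intros H Hw. apply is_lim_seq_incr_n with (N := N0).
  apply is_lim_seq_incr_n with (N := N0) in Hw.
  apply lim0_squeeze with (fun n => w (n + N0)%nat); auto. intros; apply H; lia.
Qed.

Lemma sqrt_lim0 u : (forall n, 0 <= u n) -> is_lim_seq u 0 -> is_lim_seq (fun n => sqrt (u n)) 0.
Proof.
  intros H Hu. rewrite <- sqrt_0. apply is_lim_seq_continuous; auto.
  apply continuity_pt_sqrt. lra.
Qed.

Lemma im_le_Cmod z : Rabs (Im z) <= Cmod z.
Proof.
  unfold Cmod. rewrite <- sqrt_Rsqr_abs. apply sqrt_le_1_alt. unfold Rsqr, Im.
  destruct z; simpl. nra.
Qed.

Lemma Cmod_le_re_im z : Cmod z <= Rabs (Re z) + Rabs (Im z).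
Proof.
  unfold Cmod. rewrite <- (sqrt_Rsqr (Rabs (Re z) + Rabs (Im z))).
  - apply sqrt_le_1_alt. unfold Rsqr, Re, Im. destruct z; cbn [fst snd].
    pose proof (Rabs_pos r). pose proof (Rabs_pos r0).
    rewrite <- (pow2_abs r), <- (pow2_abs r0). nra.
  - pose proof (Rabs_pos (Re z)). pose proof (Rabs_pos (Im z)). lra.
Qed.

Lemma Cmod_csum N g : Cmod (csum N g) <= rs N (fun k => Cmod (g k)).
Proof.
  induction N; simpl. rewrite Cmod_0. lra.
  eapply Rle_trans. apply Cmod_triangle. lra.
Qed.

Lemma re_csum N g : Re (csum N g) = rs N (fun k => Re (g k)).
Proof. induction N; simpl. reflexivity. rewrite <- IHN. reflexivity. Qed.
Lemma im_csum N g : Im (csum N g) = rs N (fun k => Im (g k)).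
Proof. induction N; simpl. reflexivity. rewrite <- IHN. reflexivity. Qed.

Lemma csum_ext N f g : (forall k, (k < N)%nat -> f k = g k) -> csum N f = csum N g.
Proof. induction N; intros H; simpl; auto. rewrite IHN, H; auto. Qed.

Lemma csum_plus N f g : csum N (fun k => Cplus (f k) (g k)) = Cplus (csum N f) (csum N g).
Proof. induction N; simpl. Ceq. rewrite IHN. ring. Qed.

Lemma csum_scal N c f : csum N (fun k => Cmult c (f k)) = Cmult c (csum N f).
Proof. induction N; simpl. Ceq. rewrite IHN. ring. Qed.

Lemma csum_conj N f : csum N (fun k => Cconj (f k)) = Cconj (csum N f).
Proof. induction N; simpl. Ceq. rewrite IHN. rewrite Cplus_conj. reflexivity. Qed.

Lemma csum_kron N k g : csum N (fun n => if (k =? n)%nat then g n else RtoC 0) =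
  if (k <? N)%nat then g k else RtoC 0.
Proof.
  induction N; simpl. reflexivity. rewrite IHN.
  destruct (Nat.eqb_spec k N); destruct (Nat.ltb_spec k N); destruct (Nat.ltb_spec k (S N)); try lia; subst; ring.
Qed.

Lemma csum_kron' N k g : csum N (fun n => if (n =? k)%nat then g n else RtoC 0) =
  if (k <? N)%nat then g k else RtoC 0.
Proof.
  rewrite <- csum_kron. apply csum_ext. intros. rewrite Nat.eqb_sym. reflexivity.
Qed.


Lemma Cmod_minus_sym a b : Cmod (Cminus a b) = Cmod (Cminus b a).
Proof. replace (Cminus a b) with (Copp (Cminus b a)) by ring. unfold Cmod, Copp. simpl. f_equal. ring. Qed.

Lemma Cmod_tri3 a b c : Cmod (Cminus a b) <= Cmod (Cminus a c) + Cmod (Cminus c b).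
Proof. replace (Cminus a b) with (Cplus (Cminus a c) (Cminus c b)) by ring. apply Cmod_triangle. Qed.

Lemma clim_unique u l1 l2 : clim u l1 -> clim u l2 -> l1 = l2.
Proof.
  intros H1 H2.
  assert (H : is_lim_seq (fun J => Cmod (Cminus (u J) l1) + Cmod (Cminus (u J) l2)) (0 + 0)).
  { apply is_lim_seq_plus'; auto. }
  assert (Hb : forall J, Cmod (Cminus l2 l1) <= Cmod (Cminus (u J) l1) + Cmod (Cminus (u J) l2)).
  { intros J. eapply Rle_trans; [apply (Cmod_tri3 _ _ (u J))|]. rewrite (Cmod_minus_sym l2 (u J)); lra. }
  assert (Hle := is_lim_seq_le (fun _ => Cmod (Cminus l2 l1)) _ _ _ Hb (is_lim_seq_const _) H).
  simpl in Hle.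
  assert (Cmod (Cminus l2 l1) = 0). { pose proof (Cmod_ge_0 (Cminus l2 l1)). lra. }
  apply Cmod_eq_0 in H0. replace l2 with (Cplus (Cminus l2 l1) l1) by ring. rewrite H0. ring.
Qed.

Lemma clim_squeeze u l w : (forall J, Cmod (Cminus (u J) l) <= w J) -> is_lim_seq w 0 -> clim u l.
Proof. intros H Hw. apply lim0_squeeze with w; auto. intros; split; auto. apply Cmod_ge_0. Qed.

Lemma clim_ext u v l : (forall J, u J = v J) -> clim u l -> clim v l.
Proof. intros H Hu. unfold clim. apply is_lim_seq_ext with (2 := Hu). intros; rewrite H; auto. Qed.

Lemma clim_const l : clim (fun _ => l) l.
Proof.
  unfold clim. apply is_lim_seq_ext with (fun _ => 0). intros. replace (Cminus l l) with (RtoC 0) by ring.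
  rewrite Cmod_0; auto. apply is_lim_seq_const.
Qed.

Lemma clim_plus u v a b : clim u a -> clim v b -> clim (fun J => Cplus (u J) (v J)) (Cplus a b).
Proof.
  intros Hu Hv. apply clim_squeeze with (fun J => Cmod (Cminus (u J) a) + Cmod (Cminus (v J) b)).
  - intros J. replace (Cminus (Cplus (u J) (v J)) (Cplus a b)) with (Cplus (Cminus (u J) a) (Cminus (v J) b)) by ring.
    apply Cmod_triangle.
  - replace 0 with (0 + 0) by ring. apply is_lim_seq_plus'; auto.
Qed.

Lemma clim_scal c u a : clim u a -> clim (fun J => Cmult c (u J)) (Cmult c a).
Proof.
  intros Hu. apply clim_squeeze with (fun J => Cmod c * Cmod (Cminus (u J) a)).
  - intros J. replace (Cminus (Cmult c (u J)) (Cmult c a)) with (Cmult c (Cminus (u J) a)) by ring.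
    rewrite Cmod_mult. lra.
  - replace 0 with (Cmod c * 0) by ring. apply (is_lim_seq_scal_l _ (Cmod c) 0). auto.
Qed.

Lemma clim_conj u a : clim u a -> clim (fun J => Cconj (u J)) (Cconj a).
Proof.
  intros Hu. apply clim_squeeze with (fun J => Cmod (Cminus (u J) a)); auto.
  intros J. rewrite <- Cminus_conj, Cmod_conj. lra.
Qed.

Lemma clim_bound u l B : (forall J, Cmod (u J) <= B) -> clim u l -> Cmod l <= B.
Proof.
  intros H Hu.
  assert (Hb : forall J, Cmod l <= B + Cmod (Cminus (u J) l)).
  { intros J. replace l with (Cplus (u J) (Copp (Cminus (u J) l))) at 1 by ring.
    eapply Rle_trans. apply Cmod_triangle. rewrite Cmod_opp. specialize (H J). lra. }
  assert (HL : is_lim_seq (fun J => B + Cmod (Cminus (u J) l)) (B + 0)).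
  { apply is_lim_seq_plus'. apply is_lim_seq_const. auto. }
  pose proof (is_lim_seq_le _ _ _ _ Hb (is_lim_seq_const _) HL). simpl in H0. lra.
Qed.

Lemma clim_CSeries s l : clim (fun J => csum J s) l -> CSeries s = l.
Proof.
  intros H. unfold CSeries.
  assert (Hre : Series (fun n => Re (s n)) = Re l).
  { apply is_series_unique. change (is_lim_seq (sum_n (fun n => Re (s n))) (Re l)).
    apply is_lim_seq_ext with (fun N => rs (S N) (fun n => Re (s n))). intros; rewrite sum_n_rs; auto.
    apply (is_lim_seq_incr_1 (fun N => rs N (fun n => Re (s n)))).
    replace (Finite (Re l)) with (Finite (0 + Re l)) by (f_equal; ring).
    apply is_lim_seq_ext with (fun N => (rs N (fun n => Re (s n)) - Re l) + Re l). intros; ring.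
    apply is_lim_seq_plus'. 2: apply is_lim_seq_const.
    apply is_lim_seq_abs_0. apply lim0_squeeze with (fun J => Cmod (Cminus (csum J s) l)); auto.
    intros J. split. apply Rabs_pos. rewrite <- re_csum. eapply Rle_trans. 2: apply re_le_Cmod.
    right. f_equal. }
  assert (Him : Series (fun n => Im (s n)) = Im l).
  { apply is_series_unique. change (is_lim_seq (sum_n (fun n => Im (s n))) (Im l)).
    apply is_lim_seq_ext with (fun N => rs (S N) (fun n => Im (s n))). intros; rewrite sum_n_rs; auto.
    apply (is_lim_seq_incr_1 (fun N => rs N (fun n => Im (s n)))).
    replace (Finite (Im l)) with (Finite (0 + Im l)) by (f_equal; ring).
    apply is_lim_seq_ext with (fun N => (rs N (fun n => Im (s n)) - Im l) + Im l). intros; ring.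
    apply is_lim_seq_plus'. 2: apply is_lim_seq_const.
    apply is_lim_seq_abs_0. apply lim0_squeeze with (fun J => Cmod (Cminus (csum J s) l)); auto.
    intros J. split. apply Rabs_pos. rewrite <- im_csum. eapply Rle_trans. 2: apply im_le_Cmod.
    right. f_equal. }
  rewrite Hre, Him. destruct l; reflexivity.
Qed.

Lemma abs_CSeries s : ex_series (fun n => Cmod (s n)) -> clim (fun J => csum J s) (CSeries s).
Proof.
  intros H.
  assert (Hr : ex_series (fun n => Re (s n))).
  { apply ex_series_Rabs. apply ex_series_Rle with (fun n => Cmod (s n)); auto.
    intros; split. apply Rabs_pos. apply re_le_Cmod. }
  assert (Hi : ex_series (fun n => Im (s n))).
  { apply ex_series_Rabs. apply ex_series_Rle with (fun n => Cmod (s n)); auto.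
    intros; split. apply Rabs_pos. apply im_le_Cmod. }
  apply clim_squeeze with (fun J => Rabs (rs J (fun n => Re (s n)) - Series (fun n => Re (s n)))
     + Rabs (rs J (fun n => Im (s n)) - Series (fun n => Im (s n)))).
  - intros J. eapply Rle_trans. apply Cmod_le_re_im. unfold CSeries.
    rewrite <- re_csum, <- im_csum. right. reflexivity.
  - replace 0 with (0 + 0) by ring. apply is_lim_seq_plus'.
    + apply (proj1 (is_lim_seq_abs_0 _)).
      replace 0 with (Series (fun n => Re (s n)) - Series (fun n => Re (s n))) by ring.
      apply is_lim_seq_minus'. apply rs_lim; auto. apply is_lim_seq_const.
    + apply (proj1 (is_lim_seq_abs_0 _)).
      replace 0 with (Series (fun n => Im (s n)) - Series (fun n => Im (s n))) by ring.
      apply is_lim_seq_minus'. apply rs_lim; auto. apply is_lim_seq_const.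
Qed.

Definition nsq (x : vec) := Series (fun n => Cmod (x n) ^ 2).

Lemma sq_ge0 z : 0 <= Cmod z ^ 2.
Proof. apply pow2_ge_0. Qed.

Lemma nsq_ge0 x : l2 x -> 0 <= nsq x.
Proof. intros H. apply Series_ge0; auto. intros; apply sq_ge0. Qed.

Lemma norm2_ge0 x : 0 <= norm2 x.
Proof. apply sqrt_pos. Qed.

Lemma norm2_sq x : l2 x -> norm2 x ^ 2 = nsq x.
Proof. intros H. unfold norm2. rewrite pow2_sqrt; auto. apply nsq_ge0; auto. Qed.

Lemma norm2_nsq x : norm2 x = sqrt (nsq x).
Proof. reflexivity. Qed.

Lemma Cmod_le_norm2 x k : l2 x -> Cmod (x k) <= norm2 x.
Proof.
  intros H. unfold norm2. rewrite <- (sqrt_pow2 (Cmod (x k))) by apply Cmod_ge_0.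
  apply sqrt_le_1_alt. apply (term_le_Series (fun n => Cmod (x n) ^ 2)); auto. intros; apply sq_ge0.
Qed.

Lemma Cmod_plus_sq a b : Cmod (Cplus a b) ^ 2 <= 2 * Cmod a ^ 2 + 2 * Cmod b ^ 2.
Proof.
  pose proof (Cmod_triangle a b). pose proof (Cmod_ge_0 (Cplus a b)).
  pose proof (Cmod_ge_0 a). pose proof (Cmod_ge_0 b).
  assert (Cmod (Cplus a b) * Cmod (Cplus a b) <= (Cmod a + Cmod b) * (Cmod a + Cmod b)) by (apply Rmult_le_compat; lra).
  assert (0 <= (Cmod a - Cmod b) * (Cmod a - Cmod b)) by apply Rle_0_sqr.
  simpl. lra.
Qed.

Lemma l2_vadd x y : l2 x -> l2 y -> l2 (vadd x y).
Proof.
  intros Hx Hy. unfold l2. apply ex_series_Rle with (fun n => 2 * Cmod (x n) ^ 2 + 2 * Cmod (y n) ^ 2).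
  - intros n. split. apply sq_ge0. apply Cmod_plus_sq.
  - apply ex_series_Rplus; apply ex_series_Rscal; auto.
Qed.

Lemma nsq_vadd x y : l2 x -> l2 y -> nsq (vadd x y) <= 2 * nsq x + 2 * nsq y.
Proof.
  intros Hx Hy. unfold nsq. rewrite <- !Series_scal_l, <- Series_plus.
  - apply Series_le. intros n; split. apply sq_ge0. apply Cmod_plus_sq.
    apply ex_series_Rplus; apply ex_series_Rscal; auto.
  - apply ex_series_Rscal; auto.
  - apply ex_series_Rscal; auto.
Qed.

Lemma sqrt_2sum a b : 0 <= a -> 0 <= b -> sqrt (2 * a ^ 2 + 2 * b ^ 2) <= 2 * (a + b).
Proof.
  intros Ha Hb. rewrite <- (sqrt_pow2 (2 * (a + b))) by lra. apply sqrt_le_1_alt. nra.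
Qed.

Lemma norm2_vadd x y : l2 x -> l2 y -> norm2 (vadd x y) <= 2 * (norm2 x + norm2 y).
Proof.
  intros Hx Hy. eapply Rle_trans. 2: apply sqrt_2sum; apply norm2_ge0.
  unfold norm2 at 1. apply sqrt_le_1_alt. rewrite !norm2_sq; auto. apply nsq_vadd; auto.
Qed.

Lemma l2_vscal a x : l2 x -> l2 (vscal a x).
Proof.
  intros Hx. unfold l2. apply ex_series_Rext with (fun n => Cmod a ^ 2 * Cmod (x n) ^ 2).
  - intros n. unfold vscal. rewrite Cmod_mult. ring.
  - apply ex_series_Rscal; auto.
Qed.

Lemma nsq_vscal a x : nsq (vscal a x) = Cmod a ^ 2 * nsq x.
Proof.
  unfold nsq. rewrite <- Series_scal_l. apply Series_ext. intros n. unfold vscal. rewrite Cmod_mult. ring.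
Qed.

Lemma norm2_vscal a x : norm2 (vscal a x) = Cmod a * norm2 x.
Proof.
  rewrite !norm2_nsq, nsq_vscal, sqrt_mult_alt, sqrt_pow2; auto. apply Cmod_ge_0. apply sq_ge0.
Qed.

Lemma vsub_eq x y : vsub x y = vadd x (vscal (RtoC (-1)) y).
Proof. apply functional_extensionality. intros k. unfold vsub, vadd, vscal. Ceq. Qed.

Lemma l2_vsub x y : l2 x -> l2 y -> l2 (vsub x y).
Proof. intros. rewrite vsub_eq. apply l2_vadd; auto. apply l2_vscal; auto. Qed.

Lemma Cmod_m1' : Cmod (RtoC (-1)) = 1.
Proof. rewrite Cmod_R. rewrite Rabs_left; lra. Qed.

Lemma norm2_vsub x y : l2 x -> l2 y -> norm2 (vsub x y) <= 2 * (norm2 x + norm2 y).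
Proof.
  intros. rewrite vsub_eq. eapply Rle_trans. apply norm2_vadd; auto. apply l2_vscal; auto.
  rewrite norm2_vscal, Cmod_m1'. lra.
Qed.

Lemma bump_Series m v : ex_series (fun k => if (k =? m)%nat then v else 0) /\
  Series (fun k => if (k =? m)%nat then v else 0) = v.
Proof.
  destruct (Series_fin (fun k => if (k =? m)%nat then v else 0) (S m)) as [H1 H2].
  { intros k Hk. destruct (Nat.eqb_spec k m); lia || auto. }
  split; auto. rewrite H2. cbn [rs]. rewrite Nat.eqb_refl.
  rewrite (rs_ext m _ (fun _ => 0)). 2:{ intros k Hk. destruct (Nat.eqb_spec k m); lia || auto. }
  clear. induction m; cbn [rs]; lra.
Qed.

Definition vb (m : nat) (z : C) : vec := vscal z (e m).

Lemma vb_eval m z k : vb m z k = if (k =? m)%nat then z else RtoC 0.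
Proof. unfold vb, vscal, e. destruct (k =? m)%nat; Ceq. Qed.

Lemma Cmod_vb m z k : Cmod (vb m z k) ^ 2 = if (k =? m)%nat then Cmod z ^ 2 else 0.
Proof. rewrite vb_eval. destruct (k =? m)%nat; auto. rewrite Cmod_0. ring. Qed.

Lemma l2_vb m z : l2 (vb m z).
Proof. unfold l2. eapply ex_series_Rext. 2: apply (bump_Series m (Cmod z ^ 2)). intros; rewrite Cmod_vb; auto. Qed.

Lemma nsq_vb m z : nsq (vb m z) = Cmod z ^ 2.
Proof. unfold nsq. rewrite (Series_ext _ (fun k => if (k =? m)%nat then Cmod z ^ 2 else 0)). apply bump_Series. intros; apply Cmod_vb. Qed.

Lemma norm2_vb m z : norm2 (vb m z) = Cmod z.
Proof. rewrite norm2_nsq, nsq_vb. apply sqrt_pow2. apply Cmod_ge_0. Qed.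

Lemma l2_e m : l2 (e m).
Proof. replace (e m) with (vb m (RtoC 1)). apply l2_vb. apply functional_extensionality; intros k. unfold vb, vscal. Ceq. Qed.

Lemma l2_vzero : l2 vzero.
Proof. replace vzero with (vb 0 (RtoC 0)). apply l2_vb. apply functional_extensionality; intros k. unfold vb, vscal, vzero. Ceq. Qed.

Lemma norm2_vzero : norm2 vzero = 0.
Proof. replace vzero with (vb 0 (RtoC 0)). rewrite norm2_vb, Cmod_0; auto. apply functional_extensionality; intros k. unfold vb, vscal, vzero. Ceq. Qed.

Lemma norm2_zero x : l2 x -> norm2 x = 0 -> x = vzero.
Proof.
  intros H H0. apply functional_extensionality; intros k. pose proof (Cmod_le_norm2 x k H).
  pose proof (Cmod_ge_0 (x k)). apply Cmod_eq_0. lra.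
Qed.

Definition trunc (f : vec) (J : nat) : vec := fun k => if (k <? J)%nat then f k else RtoC 0.

Lemma trunc_S f J : trunc f (S J) = vadd (trunc f J) (vb J (f J)).
Proof.
  apply functional_extensionality; intros k. unfold trunc, vadd. rewrite vb_eval.
  destruct (Nat.ltb_spec k (S J)); destruct (Nat.ltb_spec k J); destruct (Nat.eqb_spec k J); try lia; subst; Ceq.
Qed.

Lemma trunc_0 f : trunc f 0 = vzero.
Proof. reflexivity. Qed.

Lemma l2_trunc f J : l2 (trunc f J).
Proof.
  induction J. rewrite trunc_0. apply l2_vzero. rewrite trunc_S. apply l2_vadd; auto. apply l2_vb.
Qed.

Lemma norm2_tail_lim f : l2 f -> is_lim_seq (fun J => norm2 (vsub f (trunc f J))) 0.
Proof.
  intros H. unfold norm2. apply sqrt_lim0. intros; apply nsq_ge0. apply l2_vsub; auto. apply l2_trunc.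
  apply is_lim_seq_ext with (fun J => Series (tail (fun n => Cmod (f n) ^ 2) J)).
  - intros J. unfold nsq. apply Series_ext. intros k. unfold tail, vsub, trunc.
    destruct (k <? J)%nat. replace (Cminus (f k) (f k)) with (RtoC 0) by ring. rewrite Cmod_0. ring.
    f_equal. f_equal. Ceq.
  - apply tail_lim; auto.
Qed.

Section BOP.
Variable T : op.
Hypothesis HT : bounded_op T.

Lemma bop_l2 x : l2 x -> l2 (T x).
Proof. apply HT. Qed.
Lemma bop_add x y : l2 x -> l2 y -> T (vadd x y) = vadd (T x) (T y).
Proof. apply HT. Qed.
Lemma bop_scal a x : l2 x -> T (vscal a x) = vscal a (T x).
Proof. apply HT. Qed.
Lemma bop_bound : exists M, 0 <= M /\ forall x, l2 x -> norm2 (T x) <= M * norm2 x.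
Proof.
  destruct HT as (_ & _ & _ & M & HM). exists (Rmax M 0). split. apply Rmax_r.
  intros x Hx. eapply Rle_trans. apply HM; auto. apply Rmult_le_compat_r. apply norm2_ge0. apply Rmax_l.
Qed.
Lemma bop_sub x y : l2 x -> l2 y -> T (vsub x y) = vsub (T x) (T y).
Proof. intros. rewrite !vsub_eq, bop_add, bop_scal; auto. apply l2_vscal; auto. Qed.
Lemma bop_zero : T vzero = vzero.
Proof.
  replace vzero with (vscal (RtoC 0) vzero) at 1. rewrite bop_scal. 2: apply l2_vzero.
  all: apply functional_extensionality; intros; unfold vscal, vzero; Ceq.
Qed.
Lemma bop_trunc f J : T (trunc f J) = fun k => csum J (fun j => Cmult (f j) (T (e j) k)).
Proof.
  induction J.
  - rewrite trunc_0, bop_zero. reflexivity.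
  - rewrite trunc_S, bop_add, IHJ. 2: apply l2_trunc. 2: apply l2_vb.
    unfold vb. rewrite bop_scal. 2: apply l2_e.
    apply functional_extensionality; intros k. reflexivity.
Qed.
Lemma bop_expand f k : l2 f -> clim (fun J => T (trunc f J) k) (T f k).
Proof.
  intros Hf. destruct bop_bound as (M & HM0 & HM).
  apply clim_squeeze with (fun J => M * norm2 (vsub f (trunc f J))).
  - intros J. rewrite Cmod_minus_sym.
    change (Cminus (T f k) (T (trunc f J) k)) with (vsub (T f) (T (trunc f J)) k).
    rewrite <- bop_sub; auto. 2: apply l2_trunc.
    eapply Rle_trans. apply Cmod_le_norm2. apply bop_l2. apply l2_vsub; auto. apply l2_trunc.
    apply HM. apply l2_vsub; auto. apply l2_trunc.
  - replace 0 with (M * 0) by ring. apply (is_lim_seq_scal_l _ M 0). apply norm2_tail_lim; auto.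
Qed.
End BOP.

Definition hsq (X : op) := Series (fun k => norm2 (X (e k)) ^ 2).

Lemma norm_HS_eq X : norm_HS X = sqrt (hsq X).
Proof. reflexivity. Qed.

Lemma norm_HS_ge0 X : 0 <= norm_HS X.
Proof. apply sqrt_pos. Qed.

Lemma hsq_ge0 X : HS X -> 0 <= hsq X.
Proof. intros [_ H]. apply Series_ge0; auto. intros; apply pow2_ge_0. Qed.

Lemma norm_HS_sq X : HS X -> norm_HS X ^ 2 = hsq X.
Proof. intros H. rewrite norm_HS_eq, pow2_sqrt; auto. apply hsq_ge0; auto. Qed.

Lemma HS_row X n : HS X -> ex_series (fun j => Cmod (X (e j) n) ^ 2) /\
  Series (fun j => Cmod (X (e j) n) ^ 2) <= hsq X.
Proof.
  intros [HB HX].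
  assert (Hle : forall j, 0 <= Cmod (X (e j) n) ^ 2 <= norm2 (X (e j)) ^ 2).
  { intros j. split. apply pow2_ge_0. apply pow_incr. split. apply Cmod_ge_0.
    apply Cmod_le_norm2. apply (bop_l2 X HB). apply l2_e. }
  split. apply ex_series_Rle with (2 := HX); auto. apply Series_le; auto.
Qed.

Lemma HS_apply_bound Y f n : HS Y -> l2 f -> Cmod (Y f n) <= norm2 f * norm_HS Y.
Proof.
  intros HY Hf. destruct (HS_row Y n HY) as [Hr1 Hr2].
  apply clim_bound with (u := fun J => Y (trunc f J) n). 2: apply bop_expand; auto; apply HY.
  intros J. rewrite (bop_trunc Y (proj1 HY)).
  eapply Rle_trans. apply Cmod_csum.
  eapply Rle_trans. apply rs_le with (b := fun j => Cmod (f j) * Cmod (Y (e j) n)). intros; rewrite Cmod_mult; lra.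
  eapply Rle_trans. apply CS_ser; auto; intros; apply Cmod_ge_0.
  rewrite norm2_nsq, norm_HS_eq. apply Rmult_le_compat_l. apply sqrt_pos. apply sqrt_le_1_alt. auto.
Qed.

Lemma bop_oadd S T : bounded_op S -> bounded_op T -> bounded_op (oadd S T).
Proof.
  intros HS HT. split; [|split; [|split]]; unfold oadd.
  - intros x Hx. apply l2_vadd; apply bop_l2; auto.
  - intros x y Hx Hy. rewrite (bop_add S HS x y Hx Hy), (bop_add T HT x y Hx Hy).
    apply functional_extensionality; intros k; unfold vadd; ring.
  - intros a x Hx. rewrite (bop_scal S HS a x Hx), (bop_scal T HT a x Hx).
    apply functional_extensionality; intros k; unfold vadd, vscal; ring.
  - destruct (bop_bound S HS) as (M1 & H1 & HM1). destruct (bop_bound T HT) as (M2 & H2 & HM2).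
    exists (2 * (M1 + M2)). intros x Hx. eapply Rle_trans. apply norm2_vadd; apply bop_l2; auto.
    specialize (HM1 x Hx). specialize (HM2 x Hx). lra.
Qed.

Lemma bop_oscal a T : bounded_op T -> bounded_op (oscal a T).
Proof.
  intros HT. split; [|split; [|split]]; unfold oscal.
  - intros x Hx. apply l2_vscal; apply bop_l2; auto.
  - intros x y Hx Hy. rewrite (bop_add T HT x y Hx Hy). apply functional_extensionality; intros k; unfold vadd, vscal; ring.
  - intros b x Hx. rewrite (bop_scal T HT b x Hx). apply functional_extensionality; intros k; unfold vscal; ring.
  - destruct (bop_bound T HT) as (M & H1 & HM). exists (Cmod a * M). intros x Hx.
    rewrite norm2_vscal. specialize (HM x Hx). pose proof (Cmod_ge_0 a).
    rewrite Rmult_assoc. apply Rmult_le_compat_l; auto.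
Qed.

Lemma bop_ocomp S T : bounded_op S -> bounded_op T -> bounded_op (ocomp S T).
Proof.
  intros HS HT. split; [|split; [|split]]; unfold ocomp.
  - intros x Hx. apply bop_l2; auto. apply bop_l2; auto.
  - intros x y Hx Hy. rewrite (bop_add T HT x y Hx Hy). apply (bop_add S HS); apply bop_l2; auto.
  - intros b x Hx. rewrite (bop_scal T HT b x Hx). apply (bop_scal S HS); apply bop_l2; auto.
  - destruct (bop_bound S HS) as (M1 & H1 & HM1). destruct (bop_bound T HT) as (M2 & H2 & HM2).
    exists (M1 * M2). intros x Hx. eapply Rle_trans. apply HM1. apply bop_l2; auto.
    rewrite Rmult_assoc. apply Rmult_le_compat_l; auto.
Qed.

Lemma eps_vb n m : eps n m = fun f => vb n (f m).
Proof.
  apply functional_extensionality; intros f. apply functional_extensionality; intros k.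
  unfold eps. rewrite vb_eval. reflexivity.
Qed.

Lemma bop_eps n m : bounded_op (eps n m).
Proof.
  rewrite eps_vb. split; [|split; [|split]].
  - intros; apply l2_vb.
  - intros x y _ _. apply functional_extensionality; intros k. unfold vadd. rewrite !vb_eval.
    destruct (k =? n)%nat; Ceq.
  - intros a x _. apply functional_extensionality; intros k. unfold vscal. rewrite !vb_eval.
    destruct (k =? n)%nat; Ceq.
  - exists 1. intros x Hx. rewrite norm2_vb. rewrite Rmult_1_l. apply Cmod_le_norm2; auto.
Qed.

Lemma HS_oadd X Y : HS X -> HS Y -> HS (oadd X Y).
Proof.
  intros [HX1 HX2] [HY1 HY2]. split. apply bop_oadd; auto.
  apply ex_series_Rle with (fun k => 2 * norm2 (X (e k)) ^ 2 + 2 * norm2 (Y (e k)) ^ 2).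
  - intros k. split. apply pow2_ge_0. unfold oadd.
    rewrite !norm2_sq; try apply l2_vadd; try apply bop_l2; auto; try apply l2_e.
    apply nsq_vadd; apply bop_l2; auto; apply l2_e.
  - apply ex_series_Rplus; apply ex_series_Rscal; auto.
Qed.

Lemma HS_oscal a X : HS X -> HS (oscal a X).
Proof.
  intros [HX1 HX2]. split. apply bop_oscal; auto.
  apply ex_series_Rext with (fun k => Cmod a ^ 2 * norm2 (X (e k)) ^ 2).
  - intros k. unfold oscal. rewrite norm2_vscal. ring.
  - apply ex_series_Rscal; auto.
Qed.

Lemma HS_lcomp B X : bounded_op B -> HS X -> HS (ocomp B X).
Proof.
  intros HB [HX1 HX2]. split. apply bop_ocomp; auto.
  destruct (bop_bound B HB) as (M & HM0 & HM).
  apply ex_series_Rle with (fun k => M ^ 2 * norm2 (X (e k)) ^ 2).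
  - intros k. split. apply pow2_ge_0. unfold ocomp. rewrite <- Rpow_mult_distr. apply pow_incr.
    split. apply norm2_ge0. apply HM. apply bop_l2; auto. apply l2_e.
  - apply ex_series_Rscal; auto.
Qed.

Lemma HS_eps m j : HS (eps m j).
Proof.
  split. apply bop_eps. rewrite eps_vb.
  eapply ex_series_Rext. 2: apply (bump_Series j 1).
  intros k. rewrite norm2_vb. unfold e. destruct (Nat.eqb_spec k j); destruct (Nat.eqb_spec j k); try lia.
  rewrite Cmod_1; ring. rewrite Cmod_0; ring.
Qed.

Lemma bop_ozero : bounded_op ozero.
Proof.
  split; [|split; [|split]]; unfold ozero.
  - intros; apply l2_vzero.
  - intros; apply functional_extensionality; intros k; unfold vadd, vzero; Ceq.
  - intros; apply functional_extensionality; intros k; unfold vscal, vzero; Ceq.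
  - exists 0. intros. rewrite norm2_vzero. lra.
Qed.

Lemma HS_ozero : HS ozero.
Proof.
  split. apply bop_ozero. eapply ex_series_Rext. 2: apply (bump_Series 0 0).
  intros k. unfold ozero. rewrite norm2_vzero. destruct (k =? 0)%nat; ring.
Qed.

Lemma HS_osum N F : (forall n, HS (F n)) -> HS (osum N F).
Proof. intros H. induction N; simpl. apply HS_ozero. apply HS_oadd; auto. Qed.

Lemma osum_eval N F f k : osum N F f k = csum N (fun n => F n f k).
Proof. induction N; simpl. reflexivity. unfold oadd, vadd. rewrite IHN. reflexivity. Qed.

Definition isum (x y : vec) := fun n => Cmult (Cconj (x n)) (y n).

Lemma clim_ev u l N : (forall J, (N <= J)%nat -> u J = l) -> clim u l.
Proof.
  intros H. unfold clim. apply is_lim_seq_ext_loc with (fun _ => 0).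
  exists N. intros J HJ. rewrite H; auto. replace (Cminus l l) with (RtoC 0) by ring. rewrite Cmod_0; auto.
  apply is_lim_seq_const.
Qed.

Lemma inner_clim x y : l2 x -> l2 y -> clim (fun J => csum J (isum x y)) (inner x y).
Proof.
  intros Hx Hy. apply abs_CSeries. unfold isum.
  apply ex_series_Rle with (fun n => (Cmod (x n) ^ 2 + Cmod (y n) ^ 2) / 2).
  - intros n. rewrite Cmod_mult, Cmod_conj. pose proof (Cmod_ge_0 (x n)). pose proof (Cmod_ge_0 (y n)).
    split. apply Rmult_le_pos; auto.
    assert (0 <= (Cmod (x n) - Cmod (y n)) * (Cmod (x n) - Cmod (y n))) by apply Rle_0_sqr. simpl. lra.
  - apply ex_series_Rext with (fun n => /2 * (Cmod (x n) ^ 2 + Cmod (y n) ^ 2)). intros; field.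
    apply ex_series_Rscal. apply ex_series_Rplus; auto.
Qed.

Lemma inner_bound x y : l2 x -> l2 y -> Cmod (inner x y) <= norm2 x * norm2 y.
Proof.
  intros Hx Hy. apply clim_bound with (2 := inner_clim x y Hx Hy).
  intros J. eapply Rle_trans. apply Cmod_csum. unfold isum.
  eapply Rle_trans. apply rs_le with (b := fun j => Cmod (x j) * Cmod (y j)). intros; rewrite Cmod_mult, Cmod_conj; lra.
  rewrite !norm2_nsq. apply CS_ser; auto; intros; apply Cmod_ge_0.
Qed.

Lemma inner_eq_clim x y l : l2 x -> l2 y -> clim (fun J => csum J (isum x y)) l -> inner x y = l.
Proof. intros Hx Hy H. eapply clim_unique. apply inner_clim; auto. auto. Qed.

Lemma inner_vadd_r x y z : l2 x -> l2 y -> l2 z -> inner x (vadd y z) = Cplus (inner x y) (inner x z).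
Proof.
  intros. apply inner_eq_clim; auto. apply l2_vadd; auto.
  eapply clim_ext. 2: apply clim_plus; apply inner_clim; eauto.
  intros J. cbv beta. rewrite <- csum_plus. apply csum_ext. intros. unfold isum, vadd. ring.
Qed.

Lemma inner_vscal_r x a y : l2 x -> l2 y -> inner x (vscal a y) = Cmult a (inner x y).
Proof.
  intros. apply inner_eq_clim; auto. apply l2_vscal; auto.
  eapply clim_ext. 2: apply clim_scal; apply inner_clim; eauto.
  intros J. cbv beta. rewrite <- csum_scal. apply csum_ext. intros. unfold isum, vscal. ring.
Qed.

Lemma inner_conj x y : l2 x -> l2 y -> inner y x = Cconj (inner x y).
Proof.
  intros. apply inner_eq_clim; auto.
  eapply clim_ext. 2: apply clim_conj; apply inner_clim; eauto.
  intros J. cbv beta. rewrite <- csum_conj. apply csum_ext. intros. unfold isum. rewrite Cmult_conj, Cconj_conj. ring.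
Qed.

Lemma inner_vadd_l x y z : l2 x -> l2 y -> l2 z -> inner (vadd x y) z = Cplus (inner x z) (inner y z).
Proof.
  intros. rewrite inner_conj, inner_vadd_r, Cplus_conj, <- !inner_conj; auto. apply l2_vadd; auto.
Qed.

Lemma inner_vscal_l a x y : l2 x -> l2 y -> inner (vscal a x) y = Cmult (Cconj a) (inner x y).
Proof.
  intros. rewrite inner_conj, inner_vscal_r, Cmult_conj, <- !inner_conj; auto. apply l2_vscal; auto.
Qed.

Lemma inner_vsub_r x y z : l2 x -> l2 y -> l2 z -> inner x (vsub y z) = Cminus (inner x y) (inner x z).
Proof.
  intros. rewrite vsub_eq, inner_vadd_r, inner_vscal_r; auto. ring. apply l2_vscal; auto.
Qed.

Lemma inner_vb_l m z y : inner (vb m z) y = Cmult (Cconj z) (y m).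
Proof.
  apply clim_CSeries. apply clim_ev with (S m). intros J HJ.
  rewrite (csum_ext J _ (fun n => if (n =? m)%nat then Cmult (Cconj z) (y n) else RtoC 0)).
  - rewrite csum_kron'. destruct (Nat.ltb_spec m J); auto. lia.
  - intros k _. unfold isum. rewrite vb_eval. destruct (k =? m)%nat. auto. Ceq.
Qed.

Lemma inner_vb_r x m z : inner x (vb m z) = Cmult (Cconj (x m)) z.
Proof.
  apply clim_CSeries. apply clim_ev with (S m). intros J HJ.
  rewrite (csum_ext J _ (fun n => if (n =? m)%nat then Cmult (Cconj (x n)) z else RtoC 0)).
  - rewrite csum_kron'. destruct (Nat.ltb_spec m J); auto. lia.
  - intros k _. unfold isum. rewrite vb_eval. destruct (k =? m)%nat. auto. ring.
Qed.

Lemma inner_vzero_l y : inner vzero y = RtoC 0.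
Proof.
  apply clim_CSeries. apply clim_ev with 0%nat. intros J _.
  induction J; simpl. auto. rewrite IHJ. unfold isum, vzero. Ceq.
Qed.

Lemma inner_self x : l2 x -> inner x x = RtoC (nsq x).
Proof.
  intros Hx. apply inner_eq_clim; auto.
  apply clim_squeeze with (fun J => Rabs (rs J (fun n => Cmod (x n) ^ 2) - nsq x)).
  - intros J. right.
    replace (csum J (isum x x)) with (RtoC (rs J (fun n => Cmod (x n) ^ 2))).
    + unfold Cminus. rewrite <- Cmod_R. f_equal. Ceq.
    + induction J; simpl. auto. rewrite <- IHJ. unfold isum. rewrite (Cmult_comm (Cconj _)), <- Cmod2_conj.
      unfold RtoC, Cplus. simpl. apply injective_projections; simpl; ring.
  - apply (proj1 (is_lim_seq_abs_0 _)).
    replace 0 with (nsq x - nsq x) by ring. apply is_lim_seq_minus'. apply rs_lim; auto. apply is_lim_seq_const.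
Qed.

Lemma inner_e_r x m : inner x (e m) = Cconj (x m).
Proof.
  replace (e m) with (vb m (RtoC 1)). rewrite inner_vb_r. ring.
  apply functional_extensionality; intros k. unfold vb, vscal. Ceq.
Qed.

Section AS.
Variable A : opS.
Hypothesis hB : bounded_opS A.

Lemma A_HS X : HS X -> HS (A X).
Proof. apply hB. Qed.

Lemma A_add X Y x : HS X -> HS Y -> l2 x -> A (oadd X Y) x = vadd (A X x) (A Y x).
Proof. intros. destruct hB as (_ & Hadd & _). apply Hadd; auto. Qed.

Lemma A_scal a X x : HS X -> l2 x -> A (oscal a X) x = vscal a (A X x).
Proof. intros. destruct hB as (_ & _ & Hsc & _). apply Hsc; auto. Qed.

Lemma A_bound : exists MA, 0 <= MA /\ forall X, HS X -> norm_HS (A X) <= MA * norm_HS X.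
Proof.
  destruct hB as (_ & _ & _ & M & HM). exists (Rmax M 0). split. apply Rmax_r.
  intros X HX. eapply Rle_trans. apply HM; auto. apply Rmult_le_compat_r. apply norm_HS_ge0. apply Rmax_l.
Qed.

Lemma osub_eq X Y : osub X Y = oadd X (oscal (RtoC (-1)) Y).
Proof. apply functional_extensionality; intros x. unfold osub, oadd, oscal. apply vsub_eq. Qed.

Lemma A_sub X Y x : HS X -> HS Y -> l2 x -> A (osub X Y) x = vsub (A X x) (A Y x).
Proof.
  intros. rewrite osub_eq, A_add, A_scal, vsub_eq; auto. apply HS_oscal; auto.
Qed.

Lemma A_zero x : l2 x -> A ozero x = vzero.
Proof.
  intros Hx. replace ozero with (oscal (RtoC 0) ozero) at 1. rewrite A_scal; auto. 2: apply HS_ozero.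
  apply functional_extensionality; intros k. unfold vscal, vzero. Ceq.
  apply functional_extensionality; intros f. apply functional_extensionality; intros k. unfold oscal, ozero, vscal, vzero. Ceq.
Qed.

Lemma A_osum N F x k : (forall n, HS (F n)) -> l2 x -> A (osum N F) x k = csum N (fun n => A (F n) x k).
Proof.
  intros HF Hx. induction N; simpl.
  - rewrite A_zero; auto.
  - rewrite A_add; auto. unfold vadd. rewrite IHN. auto. apply HS_osum; auto.
Qed.

Definition Tm (n m : nat) : op := fun f j => A (eps m j) f n.

Lemma Yop_eval (m J : nat) (c : nat -> C) k :
  osum J (fun j => oscal (c j) (eps m j)) (e k) = vb m (if (k <? J)%nat then c k else RtoC 0).
Proof.
  apply functional_extensionality; intros i. rewrite osum_eval, vb_eval.
  unfold oscal, vscal, eps.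
  destruct (i =? m)%nat.
  - rewrite <- csum_kron'. apply csum_ext. intros j _. unfold e. destruct (Nat.eqb_spec j k); destruct (Nat.eqb_spec k j); try lia; Ceq.
  - clear. induction J; simpl. auto. rewrite IHJ. Ceq.
Qed.

Lemma hsq_Yop m J c : hsq (osum J (fun j => oscal (c j) (eps m j))) = rs J (fun k => Cmod (c k) ^ 2).
Proof.
  unfold hsq. rewrite <- (proj2 (head_Series (fun k => Cmod (c k) ^ 2) J)).
  apply Series_ext. intros k. rewrite Yop_eval, norm2_vb. unfold head.
  destruct (k <? J)%nat; auto. rewrite Cmod_0. ring.
Qed.

Lemma HS_Yop m J c : HS (osum J (fun j => oscal (c j) (eps m j))).
Proof. apply HS_osum. intros; apply HS_oscal; apply HS_eps. Qed.

Lemma A_Yop m J c f n : l2 f ->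
  A (osum J (fun j => oscal (c j) (eps m j))) f n = csum J (fun j => Cmult (c j) (Tm n m f j)).
Proof.
  intros Hf. rewrite A_osum; auto. 2: intros; apply HS_oscal; apply HS_eps.
  apply csum_ext. intros j _. rewrite A_scal; auto. apply HS_eps.
Qed.

Lemma csum_RtoC J (w : vec) : csum J (fun j => Cmult (Cconj (w j)) (w j)) = RtoC (rs J (fun k => Cmod (w k) ^ 2)).
Proof.
  induction J; simpl. auto. rewrite IHJ.
  rewrite (Cmult_comm (Cconj _)), <- Cmod2_conj. unfold RtoC, Cplus. simpl.
  apply injective_projections; simpl; ring.
Qed.

Lemma Tm_bound n m f : l2 f -> exists MA, 0 <= MA /\ l2 (Tm n m f) /\ nsq (Tm n m f) <= (MA * norm2 f) ^ 2.
Proof.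
  intros Hf. destruct A_bound as (MA & HMA0 & HMA). exists MA. split; auto.
  set (w := Tm n m f).
  assert (HJ : forall J, rs J (fun k => Cmod (w k) ^ 2) <= (MA * norm2 f) ^ 2).
  { intros J. set (Y := osum J (fun j => oscal (Cconj (w j)) (eps m j))).
    assert (HY : HS Y) by apply HS_Yop.
    assert (E : A Y f n = RtoC (rs J (fun k => Cmod (w k) ^ 2))).
    { unfold Y. rewrite A_Yop; auto. apply csum_RtoC. }
    set (s := rs J (fun k => Cmod (w k) ^ 2)) in *.
    assert (Hs0 : 0 <= s). { apply rs_nonneg. intros; apply pow2_ge_0. }
    assert (H1 : s <= norm2 f * (MA * sqrt s)).
    { replace s with (Cmod (A Y f n)) at 1. 2: { rewrite E, Cmod_R, Rabs_pos_eq; auto. }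
      eapply Rle_trans. apply HS_apply_bound; auto. apply A_HS; auto.
      apply Rmult_le_compat_l. apply norm2_ge0.
      eapply Rle_trans. apply HMA; auto. right. f_equal. rewrite norm_HS_eq. unfold Y. rewrite hsq_Yop. unfold s. f_equal. apply rs_ext. intros; rewrite Cmod_conj; auto. }
    pose proof (sqrt_sqrt s Hs0). pose proof (sqrt_pos s). pose proof (norm2_ge0 f).
    set (t := sqrt s) in *. set (K := MA * norm2 f).
    assert (0 <= K) by (unfold K; apply Rmult_le_pos; auto).
    assert (t * t <= K * t) by (unfold K; nra).
    simpl. nra. }
  destruct (ser_bounded (fun k => Cmod (w k) ^ 2) _ (fun k => pow2_ge_0 _) HJ). auto.
Qed.

Lemma bop_Tm n m : bounded_op (Tm n m).
Proof.
  destruct A_bound as (MA & HMA0 & HMA).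
  split; [|split; [|split]].
  - intros f Hf. destruct (Tm_bound n m f Hf) as (? & ? & ? & ?); auto.
  - intros x y Hx Hy. apply functional_extensionality; intros j. unfold Tm.
    rewrite (bop_add _ (proj1 (A_HS _ (HS_eps m j))) x y Hx Hy). reflexivity.
  - intros a x Hx. apply functional_extensionality; intros j. unfold Tm.
    rewrite (bop_scal _ (proj1 (A_HS _ (HS_eps m j))) a x Hx). reflexivity.
  - exists MA. intros x Hx.
    assert (Hw : forall J, rs J (fun k => Cmod (Tm n m x k) ^ 2) <= (MA * norm2 x) ^ 2).
    { intros J. (* repeat the argument with this MA *)
      set (w := Tm n m x).
      set (Y := osum J (fun j => oscal (Cconj (w j)) (eps m j))).
      assert (HY : HS Y) by apply HS_Yop.
      assert (E : A Y x n = RtoC (rs J (fun k => Cmod (w k) ^ 2))).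
      { unfold Y. rewrite A_Yop; auto. apply csum_RtoC. }
      set (s := rs J (fun k => Cmod (w k) ^ 2)) in *.
      assert (Hs0 : 0 <= s). { apply rs_nonneg. intros; apply pow2_ge_0. }
      assert (H1 : s <= norm2 x * (MA * sqrt s)).
      { replace s with (Cmod (A Y x n)) at 1. 2: { rewrite E, Cmod_R, Rabs_pos_eq; auto. }
        eapply Rle_trans. apply HS_apply_bound; auto. apply A_HS; auto.
        apply Rmult_le_compat_l. apply norm2_ge0.
        eapply Rle_trans. apply HMA; auto. right. f_equal. rewrite norm_HS_eq. unfold Y. rewrite hsq_Yop. unfold s. f_equal. apply rs_ext. intros; rewrite Cmod_conj; auto. }
      pose proof (sqrt_sqrt s Hs0). pose proof (sqrt_pos s). pose proof (norm2_ge0 x).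
      set (t := sqrt s) in *. set (K := MA * norm2 x).
      assert (0 <= K) by (unfold K; apply Rmult_le_pos; auto).
      assert (t * t <= K * t) by (unfold K; nra).
      simpl. nra. }
    destruct (ser_bounded _ _ (fun k => pow2_ge_0 _) Hw) as [Hl Hn].
    rewrite norm2_nsq. rewrite <- (sqrt_pow2 (MA * norm2 x)). apply sqrt_le_1_alt. auto.
    apply Rmult_le_pos; auto. apply norm2_ge0.
Qed.
End AS.

Section K.
Variable A : opS.
Hypothesis hB : bounded_opS A.

Lemma kernel eta f n m : HS eta -> l2 f -> A (ocomp (eps m m) eta) f n = eta (Tm A n m f) m.
Proof.
  intros He Hf.
  set (w := Tm A n m f).
  assert (Hw : l2 w) by (apply (bop_l2 _ (bop_Tm A hB n m)); auto).
  set (c := fun j => eta (e j) m).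
  set (Y := fun J => osum J (fun j => oscal (c j) (eps m j))).
  set (E := ocomp (eps m m) eta).
  assert (HE : HS E) by (apply HS_lcomp; auto; apply bop_eps).
  assert (HY : forall J, HS (Y J)) by (intros; apply HS_Yop).
  set (u := fun J => A (Y J) f n).
  assert (H1 : clim u (eta w m)).
  { eapply clim_ext. 2: apply (bop_expand eta (proj1 He) w m Hw).
    intros J. unfold u, Y. rewrite A_Yop; auto. rewrite (bop_trunc eta (proj1 He)). cbv beta.
    apply csum_ext. intros; unfold c, w; ring. }
  assert (H2 : clim u (A E f n)).
  { destruct (A_bound A hB) as (MA & HMA0 & HMA).
    destruct (HS_row eta m He) as [Hr _].
    apply clim_squeeze with (fun J => norm2 f * (MA * sqrt (Series (tail (fun k => Cmod (c k) ^ 2) J)))).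
    - intros J. rewrite Cmod_minus_sym. unfold u.
      change (Cminus (A E f n) (A (Y J) f n)) with (vsub (A E f) (A (Y J) f) n).
      rewrite <- A_sub; auto.
      assert (HZ : HS (osub E (Y J))) by (rewrite osub_eq; apply HS_oadd; auto; apply HS_oscal; auto).
      eapply Rle_trans. apply HS_apply_bound; auto. apply A_HS; auto.
      apply Rmult_le_compat_l. apply norm2_ge0. eapply Rle_trans. apply HMA; auto.
      apply Rmult_le_compat_l; auto. rewrite norm_HS_eq. right. f_equal.
      unfold hsq. apply Series_ext. intros k.
      replace (osub E (Y J) (e k)) with (vb m (if (k <? J)%nat then RtoC 0 else c k)).
      rewrite norm2_vb. unfold tail. destruct (k <? J)%nat; auto. rewrite Cmod_0; ring.
      apply functional_extensionality; intros i. unfold Y. unfold osub, vsub.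
      rewrite Yop_eval, !vb_eval. unfold E, ocomp, eps. unfold c.
      destruct (i =? m)%nat; destruct (k <? J)%nat; Ceq.
    - replace 0 with (norm2 f * (MA * 0)) by ring.
      apply (is_lim_seq_scal_l _ (norm2 f) (MA * 0)). apply (is_lim_seq_scal_l _ MA 0).
      apply sqrt_lim0. intros; apply Series_ge0. intros; apply tail_nonneg; intros; apply pow2_ge_0.
      apply tail_ex; auto. apply tail_lim; auto. }
  eapply clim_unique; eauto.
Qed.
End K.

Definition r1 (m : nat) (x : vec) : op := fun g => vb m (inner x g).

Lemma vb_add m a b : vb m (Cplus a b) = vadd (vb m a) (vb m b).
Proof. apply functional_extensionality; intros k. unfold vadd. rewrite !vb_eval. destruct (k =? m)%nat; Ceq. Qed.
Lemma vb_scal m a b : vb m (Cmult a b) = vscal a (vb m b).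
Proof. apply functional_extensionality; intros k. unfold vscal. rewrite !vb_eval. destruct (k =? m)%nat; Ceq. Qed.

Lemma bop_r1 m x : l2 x -> bounded_op (r1 m x).
Proof.
  intros Hx. unfold r1. split; [|split; [|split]].
  - intros; apply l2_vb.
  - intros y z Hy Hz. rewrite inner_vadd_r, vb_add; auto.
  - intros a y Hy. rewrite inner_vscal_r, vb_scal; auto.
  - exists (norm2 x). intros y Hy. rewrite norm2_vb. apply inner_bound; auto.
Qed.

Lemma r1_e m x k : r1 m x (e k) = vb m (Cconj (x k)).
Proof. unfold r1. rewrite inner_e_r. auto. Qed.

Lemma hsq_r1 m x : hsq (r1 m x) = nsq x.
Proof. unfold hsq, nsq. apply Series_ext. intros k. rewrite r1_e, norm2_vb, Cmod_conj. auto. Qed.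

Lemma HS_r1 m x : l2 x -> HS (r1 m x).
Proof.
  intros Hx. split. apply bop_r1; auto.
  eapply ex_series_Rext. 2: apply Hx. intros k. simpl. rewrite r1_e, norm2_vb, Cmod_conj. auto.
Qed.

Lemma r1_fix m x : ocomp (eps m m) (r1 m x) = r1 m x.
Proof.
  apply functional_extensionality; intros g. unfold ocomp. rewrite eps_vb. unfold r1. rewrite vb_eval, Nat.eqb_refl. auto.
Qed.

Lemma inner_vzero_r x : l2 x -> inner x vzero = RtoC 0.
Proof.
  intros Hx. replace vzero with (vscal (RtoC 0) vzero). rewrite inner_vscal_r; auto. ring. apply l2_vzero.
  apply functional_extensionality; intros k; unfold vscal, vzero; Ceq.
Qed.

Lemma inner_T_trunc T x y J : bounded_op T -> l2 x ->
  inner x (T (trunc y J)) = csum J (fun j => Cmult (y j) (inner x (T (e j)))).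
Proof.
  intros HT Hx. induction J; simpl.
  - rewrite trunc_0, bop_zero, inner_vzero_r; auto.
  - rewrite trunc_S, (bop_add T HT), inner_vadd_r, IHJ; auto; try apply l2_trunc; try apply l2_vb; try apply (bop_l2 T HT);
    try apply l2_trunc; try apply l2_vb.
    unfold vb. rewrite (bop_scal T HT), inner_vscal_r; auto. apply (bop_l2 T HT); apply l2_e. apply l2_e.
Qed.

Lemma inner_T_expand T x y : bounded_op T -> l2 x -> l2 y ->
  clim (fun J => csum J (fun j => Cmult (y j) (inner x (T (e j))))) (inner x (T y)).
Proof.
  intros HT Hx Hy. destruct (bop_bound T HT) as (M & HM0 & HM).
  apply clim_ext with (fun J => inner x (T (trunc y J))). intros J; apply inner_T_trunc; auto.
  apply clim_squeeze with (fun J => norm2 x * (M * norm2 (vsub y (trunc y J)))).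
  - intros J. assert (Ht := l2_trunc y J). assert (Hs : l2 (vsub y (trunc y J))) by (apply l2_vsub; auto).
    assert (HTy := bop_l2 T HT y Hy). assert (HTt := bop_l2 T HT _ Ht).
    rewrite Cmod_minus_sym, <- inner_vsub_r by auto. rewrite <- (bop_sub T HT) by auto.
    eapply Rle_trans. apply inner_bound; auto. apply (bop_l2 T HT); auto.
    apply Rmult_le_compat_l. apply norm2_ge0. apply HM; auto.
  - replace 0 with (norm2 x * (M * 0)) by ring.
    apply (is_lim_seq_scal_l _ (norm2 x) (M * 0)). apply (is_lim_seq_scal_l _ M 0). apply norm2_tail_lim; auto.
Qed.

Lemma CSeries_RtoC t s : CSeries (fun k => Cmult (RtoC t) (s k)) = Cmult (RtoC t) (CSeries s).
Proof.
  unfold CSeries. rewrite (Series_ext _ (fun k => t * Re (s k))), (Series_ext (fun n => Im _) (fun k => t * Im (s k))).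
  rewrite !Series_scal_l. unfold RtoC, Cmult. simpl. apply injective_projections; simpl; ring.
  all: intros; unfold RtoC, Cmult, Re, Im; simpl; ring.
Qed.

Lemma CSeries_0 s : (forall k, s k = RtoC 0) -> CSeries s = RtoC 0.
Proof.
  intros H. apply clim_CSeries. apply clim_ev with 0%nat. intros J _. induction J; simpl. auto.
  rewrite IHJ, H. Ceq.
Qed.

Section Pos.
Variable A : opS.
Hypothesis hA : posdefS A.
Let hB : bounded_opS A := proj1 hA.

Lemma A_r1 m x f k : l2 x -> l2 f -> A (r1 m x) f k = inner x (Tm A k m f).
Proof.
  intros Hx Hf. rewrite <- r1_fix at 1. rewrite kernel; auto. unfold r1. rewrite vb_eval, Nat.eqb_refl. auto.
  apply HS_r1; auto.
Qed.

Lemma Q_prop : exists c, 0 < c /\ forall eta, HS eta ->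
  Im (inner2 eta (A eta)) = 0 /\ c * hsq eta <= Re (inner2 eta (A eta)).
Proof.
  destruct (proj2 hA) as (c & Hc & H). exists c. split; auto. intros eta He.
  destruct (Req_dec (norm_HS eta) 0) as [H0|H0].
  - assert (Hz : forall k, eta (e k) = vzero).
    { intros k. apply norm2_zero. apply (bop_l2 _ (proj1 He)). apply l2_e.
      assert (norm2 (eta (e k)) ^ 2 <= hsq eta). { apply (term_le_Series (fun k => norm2 (eta (e k)) ^ 2)). intros; apply pow2_ge_0. apply He. }
      rewrite <- norm_HS_sq in H1; auto. rewrite H0 in H1. pose proof (norm2_ge0 (eta (e k))).
      simpl in H1. nra. }
    unfold inner2. rewrite CSeries_0. 2: { intros k. rewrite Hz. apply inner_vzero_l. }
    rewrite <- norm_HS_sq, H0; auto. simpl. split; lra.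
  - set (r := norm_HS eta) in *. assert (Hr : 0 < r). { pose proof (norm_HS_ge0 eta). unfold r in *; lra. }
    set (eta' := oscal (RtoC (/ r)) eta).
    assert (He' : HS eta') by (apply HS_oscal; auto).
    assert (Hn : norm_HS eta' = 1).
    { rewrite norm_HS_eq. unfold hsq, eta', oscal.
      rewrite (Series_ext _ (fun k => (/ r) ^ 2 * norm2 (eta (e k)) ^ 2)).
      rewrite Series_scal_l. fold (hsq eta). rewrite <- norm_HS_sq; auto. fold r.
      replace ((/ r) ^ 2 * r ^ 2) with 1 by (field; lra). apply sqrt_1.
      intros k. rewrite norm2_vscal, Cmod_R, Rabs_pos_eq. ring. apply Rlt_le, Rinv_0_lt_compat; auto. }
    destruct (H eta' He' Hn) as [H1 H2].
    assert (E : inner2 eta' (A eta') = Cmult (RtoC ((/ r) ^ 2)) (inner2 eta (A eta))).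
    { unfold inner2. rewrite <- CSeries_RtoC. f_equal. apply functional_extensionality; intros k.
      unfold eta'. rewrite A_scal; auto. 2: apply l2_e. unfold oscal.
      rewrite inner_vscal_l, inner_vscal_r; try apply (bop_l2 _ (proj1 He)); try apply (bop_l2 _ (proj1 (A_HS A hB _ He))); try apply l2_e.
      2: apply l2_vscal; apply (bop_l2 _ (proj1 (A_HS A hB _ He))); apply l2_e.
      unfold RtoC, Cconj, Cmult. simpl. apply injective_projections; simpl; ring. }
    rewrite E in H1, H2. 
    set (z := inner2 eta (A eta)) in *. destruct z as [a b]. simpl in H1, H2 |- *.
    assert (Hq : 0 < / r * (/ r * 1)) by (apply Rmult_lt_0_compat; [apply Rinv_0_lt_compat; auto| rewrite Rmult_1_r; apply Rinv_0_lt_compat; auto]).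
    split. nra.
    rewrite <- norm_HS_sq; auto. fold r.
    assert (Hinv : / r * (/ r * 1) * (r * r) = 1) by (field; lra).
    simpl. 
    assert (c <= / r * (/ r * 1) * a - 0 * b) by lra.
    nra.
Qed.
End Pos.

Section Herm.
Variable A : opS.
Hypothesis hA : posdefS A.
Let hB : bounded_opS A := proj1 hA.

Lemma Q_formula m n x y (lam : C) : l2 x -> l2 y ->
  inner2 (oadd (r1 m x) (oscal lam (r1 n y))) (A (oadd (r1 m x) (oscal lam (r1 n y)))) =
  Cplus (Cplus (Cplus (inner x (Tm A m m x)) (Cmult lam (inner y (Tm A m n x))))
               (Cmult (Cconj lam) (inner x (Tm A n m y))))
        (Cmult (Cmult (Cconj lam) lam) (inner y (Tm A n n y))).
Proof.
  intros Hx Hy.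
  set (eta := oadd (r1 m x) (oscal lam (r1 n y))).
  assert (HTmm := bop_Tm A hB m m). assert (HTmn := bop_Tm A hB m n).
  assert (HTnm := bop_Tm A hB n m). assert (HTnn := bop_Tm A hB n n).
  assert (Hs : forall j, inner (eta (e j)) (A eta (e j)) =
     Cplus (Cplus (Cplus (Cmult (x j) (inner x (Tm A m m (e j))))
                         (Cmult lam (Cmult (x j) (inner y (Tm A m n (e j))))))
                  (Cmult (Cconj lam) (Cmult (y j) (inner x (Tm A n m (e j))))))
           (Cmult (Cmult (Cconj lam) lam) (Cmult (y j) (inner y (Tm A n n (e j)))))).
  { intros j. unfold eta.
    rewrite (A_add A hB); try apply HS_r1; auto; try apply HS_oscal; try apply HS_r1; auto; try apply l2_e.
    rewrite (A_scal A hB); try apply HS_r1; auto; try apply l2_e.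
    unfold oadd, oscal. cbv beta. rewrite !r1_e.
    assert (Hw1 : l2 (A (r1 m x) (e j))) by (apply (bop_l2 _ (proj1 (A_HS A hB _ (HS_r1 m x Hx)))); apply l2_e).
    assert (Hw2 : l2 (A (r1 n y) (e j))) by (apply (bop_l2 _ (proj1 (A_HS A hB _ (HS_r1 n y Hy)))); apply l2_e).
    rewrite inner_vadd_l; try apply l2_vb; try apply l2_vscal; try apply l2_vb; try apply l2_vadd; try apply l2_vscal; auto.
    rewrite inner_vscal_l; try apply l2_vb; try apply l2_vadd; try apply l2_vscal; auto.
    rewrite !inner_vb_l. unfold vadd, vscal.
    rewrite !(A_r1 A hA); auto; try apply l2_e.
    rewrite !Cconj_conj. ring. }
  unfold inner2. apply clim_CSeries.
  apply clim_ext with (fun J => Cplus (Cplus (Cplus (csum J (fun j => Cmult (x j) (inner x (Tm A m m (e j)))))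
        (Cmult lam (csum J (fun j => Cmult (x j) (inner y (Tm A m n (e j)))))))
        (Cmult (Cconj lam) (csum J (fun j => Cmult (y j) (inner x (Tm A n m (e j)))))))
        (Cmult (Cmult (Cconj lam) lam) (csum J (fun j => Cmult (y j) (inner y (Tm A n n (e j))))))).
  - intros J. rewrite (csum_ext J (fun k => inner (eta (e k)) (A eta (e k))) _ (fun j _ => Hs j)).
    rewrite !csum_plus, !csum_scal. reflexivity.
  - repeat apply clim_plus; try apply clim_scal; apply inner_T_expand; auto.
Qed.

Lemma Q_real eta : HS eta -> Im (inner2 eta (A eta)) = 0.
Proof. intros He. destruct (Q_prop A hA) as (c & Hc & H). apply H; auto. Qed.

Lemma HS_eta m n x y lam : l2 x -> l2 y -> HS (oadd (r1 m x) (oscal lam (r1 n y))).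
Proof. intros. apply HS_oadd. apply HS_r1; auto. apply HS_oscal; apply HS_r1; auto. Qed.

Lemma diag_real m x : l2 x -> Im (inner x (Tm A m m x)) = 0.
Proof.
  intros Hx. pose proof (Q_real _ (HS_eta m m x x (RtoC 0) Hx Hx)) as H.
  rewrite Q_formula in H; auto.
  set (a := inner x (Tm A m m x)) in *. set (b := inner x (Tm A m m x)) in *.
  destruct a, b. unfold Cplus, Cmult, Cconj, RtoC, Im in *. simpl in *. lra.
Qed.

Lemma herm n m x y : l2 x -> l2 y -> inner y (Tm A m n x) = inner (Tm A n m y) x.
Proof.
  intros Hx Hy.
  pose proof (Q_real _ (HS_eta m n x y (RtoC 1) Hx Hy)) as H1.
  pose proof (Q_real _ (HS_eta m n x y Ci Hx Hy)) as H2.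
  rewrite Q_formula in H1, H2; auto.
  pose proof (diag_real m x Hx) as D1. pose proof (diag_real n y Hy) as D2.
  rewrite (inner_conj x (Tm A n m y)); auto. 2: apply (bop_l2 _ (bop_Tm A hB n m)); auto.
  set (d1 := inner x (Tm A m m x)) in *. set (d2 := inner y (Tm A n n y)) in *.
  set (p := inner y (Tm A m n x)) in *. set (q := inner x (Tm A n m y)) in *.
  destruct d1, d2, p, q. unfold Cplus, Cmult, Cconj, RtoC, Ci, Im in *. simpl in *.
  apply injective_projections; simpl; lra.
Qed.

Lemma diag_pos : exists c, 0 < c /\ forall m x, l2 x -> c * nsq x <= Re (inner x (Tm A m m x)).
Proof.
  destruct (Q_prop A hA) as (c & Hc & H). exists c. split; auto. intros m x Hx.
  set (eta := oadd (r1 m x) (oscal (RtoC 0) (r1 m x))).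
  assert (Eeta : eta = r1 m x).
  { apply functional_extensionality; intros g. apply functional_extensionality; intros k.
    unfold eta, oadd, oscal, vadd, vscal. ring. }
  destruct (H eta (HS_eta m m x x (RtoC 0) Hx Hx)) as [_ H2].
  unfold eta in H2 at 2 3. rewrite Q_formula in H2; auto.
  rewrite Eeta, hsq_r1 in H2.
  set (a := inner x (Tm A m m x)) in *. destruct a. unfold Cplus, Cmult, Cconj, RtoC, Re in *. simpl in *. lra.
Qed.
End Herm.

Definition c1 : C := Cdiv (Cplus (RtoC 1) Ci) (RtoC 2).
Definition c2 : C := Cdiv (Cminus (RtoC 1) Ci) (RtoC 2).

Lemma c1_conj : Cconj c2 = c1.
Proof. unfold c1, c2. Ceq. Qed.
Lemma c2_conj : Cconj c1 = c2.
Proof. unfold c1, c2. Ceq. Qed.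
Lemma c12_sum : Cplus c1 c2 = RtoC 1.
Proof. unfold c1, c2. Ceq. Qed.
Lemma c12_prod : Cmult (RtoC 2) (Cmult c1 c2) = RtoC 1.
Proof. unfold c1, c2. Ceq. Qed.
Lemma c12_sq : Cplus (Cmult c1 c1) (Cmult c2 c2) = RtoC 0.
Proof. unfold c1, c2. Ceq. Qed.

Definition bop11 (d : R) : op := fun g => vadd (vscal (RtoC d) g) (vscal (Cmult (RtoC (1 - d)) (g 0%nat)) (e 0)).

Definition amat (T : nat -> nat -> op) (d : R) : nat -> nat -> op := fun n m =>
  if (n =? m)%nat then (if (n =? 0)%nat then T 0%nat 0%nat else oadd (T n n) (oscal (RtoC (- d)) (T 0%nat 0%nat)))
  else oadd (oscal c2 (T n m)) (oscal c1 (T m n)).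

Lemma e_vb m : e m = vb m (RtoC 1).
Proof. apply functional_extensionality; intros k. unfold vb, vscal. Ceq. Qed.

Lemma norm2_e m : norm2 (e m) = 1.
Proof. rewrite e_vb, norm2_vb, Cmod_1. auto. Qed.

Lemma inner_e_l m y : inner (e m) y = y m.
Proof. rewrite e_vb, inner_vb_l. Ceq. Qed.

Lemma bop11_ok d : 0 < d <= 1/2 -> selfadjoint (bop11 d) /\ posdef (bop11 d).
Proof.
  intros Hd.
  assert (HB : bounded_op (bop11 d)).
  { unfold bop11. split; [|split; [|split]].
    - intros x Hx. apply l2_vadd; apply l2_vscal; auto. apply l2_e.
    - intros x y _ _. apply functional_extensionality; intros k. unfold vadd, vscal. ring.
    - intros a x _. apply functional_extensionality; intros k. unfold vadd, vscal. ring.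
    - exists (2 * (Rabs d + Rabs (1 - d))). intros x Hx.
      eapply Rle_trans. apply norm2_vadd. apply l2_vscal; auto. apply l2_vscal, l2_e.
      rewrite !norm2_vscal, norm2_e, Cmod_mult, !Cmod_R.
      pose proof (Cmod_le_norm2 x 0 Hx). pose proof (Rabs_pos (1 - d)). pose proof (Cmod_ge_0 (x 0%nat)).
      assert (Rabs (1 - d) * Cmod (x 0%nat) <= Rabs (1 - d) * norm2 x) by (apply Rmult_le_compat_l; auto).
      nra. }
  assert (Hin : forall x y, l2 x -> l2 y -> inner (bop11 d x) y =
     Cplus (Cmult (RtoC d) (inner x y)) (Cmult (RtoC (1 - d)) (Cmult (Cconj (x 0%nat)) (y 0%nat)))).
  { intros x y Hx Hy. unfold bop11. rewrite inner_vadd_l, !inner_vscal_l, inner_e_l; auto; try apply l2_vscal; try apply l2_e; auto.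
    rewrite Cmult_conj. unfold RtoC, Cconj. Ceq. }
  assert (Hin2 : forall x y, l2 x -> l2 y -> inner x (bop11 d y) =
     Cplus (Cmult (RtoC d) (inner x y)) (Cmult (RtoC (1 - d)) (Cmult (Cconj (x 0%nat)) (y 0%nat)))).
  { intros x y Hx Hy. unfold bop11. rewrite inner_vadd_r, !inner_vscal_r, inner_e_r; auto; try apply l2_vscal; try apply l2_e; auto.
    ring. }
  split; split; auto.
  - intros x y Hx Hy. rewrite Hin, Hin2; auto.
  - exists d. split. lra. intros x Hx Hn. rewrite Hin2, inner_self; auto.
    rewrite <- norm2_sq, Hn; auto.
    rewrite (Cmult_comm (Cconj _)), <- Cmod2_conj.
    unfold RtoC, Cplus, Cmult, Re, Im. simpl. split. ring.
    pose proof (Cmod_ge_0 (x 0%nat)). assert (0 <= (1 - d) * (Cmod (x 0%nat) * (Cmod (x 0%nat) * 1))) by (apply Rmult_le_pos; nra). nra.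
Qed.

Section AM.
Variable T : nat -> nat -> op.
Hypothesis HT : forall n m, bounded_op (T n m).
Hypothesis Hh : forall n m x y, l2 x -> l2 y -> inner (T n m y) x = inner y (T m n x).

Lemma sa_T00 : selfadjoint (T 0%nat 0%nat).
Proof. unfold selfadjoint. split; [apply HT| intros x y Hx Hy; apply Hh; auto]. Qed.

Lemma sa_diag d n : selfadjoint (oadd (T n n) (oscal (RtoC (- d)) (T 0%nat 0%nat))).
Proof.
  unfold selfadjoint. split. apply bop_oadd; auto. apply bop_oscal; auto.
  intros x y Hx Hy. unfold oadd, oscal.
  assert (L := fun n m x => bop_l2 _ (HT n m) x).
  rewrite inner_vadd_l, inner_vadd_r, inner_vscal_l, inner_vscal_r; auto; try apply l2_vscal; auto.
  rewrite !Hh; auto. f_equal. f_equal. unfold RtoC, Cconj. Ceq.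
Qed.

Lemma sa_off n m : selfadjoint (oadd (oscal c2 (T n m)) (oscal c1 (T m n))).
Proof.
  unfold selfadjoint. split. apply bop_oadd; apply bop_oscal; auto.
  intros x y Hx Hy. unfold oadd, oscal.
  assert (L := fun n m x => bop_l2 _ (HT n m) x).
  rewrite inner_vadd_l, inner_vadd_r, !inner_vscal_l, !inner_vscal_r; auto; try apply l2_vscal; auto.
  rewrite !Hh; auto. rewrite c1_conj, c2_conj. ring.
Qed.

Lemma amat_sa d n m : selfadjoint (amat T d n m).
Proof.
  unfold amat. destruct (n =? m)%nat. destruct (n =? 0)%nat. apply sa_T00. apply sa_diag. apply sa_off.
Qed.
End AM.

Lemma csum_zero N g : (forall n, (n < N)%nat -> g n = RtoC 0) -> csum N g = RtoC 0.
Proof. induction N; intros H; simpl. auto. rewrite IHN, H; auto. Ceq. Qed.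

Lemma csum_if N (b : bool) g : csum N (fun n => if b then g n else RtoC 0) = if b then csum N g else RtoC 0.
Proof. destruct b. auto. apply csum_zero; auto. Qed.

Lemma heps_eval n m g k : heps n m g k =
  Cplus (Cmult c1 (if (k =? n)%nat then g m else RtoC 0)) (Cmult c2 (if (k =? m)%nat then g n else RtoC 0)).
Proof. reflexivity. Qed.

Definition G2 (n m : nat) : bool := ((n =? 0)%nat && (m =? 0)%nat)%bool.

Lemma dsum N k (V : nat -> nat -> vec) :
  csum N (fun n => csum N (fun m => if G2 n m then RtoC 0 else heps n m (V n m) k)) =
  if (k <? N)%nat then csum N (fun m => if G2 k m then RtoC 0 else Cplus (Cmult c1 (V k m m)) (Cmult c2 (V m k m))) else RtoC 0.
Proof.
  set (P := fun n m => if G2 n m then RtoC 0 else Cmult c1 (V n m m)).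
  set (R := fun n => if G2 n k then RtoC 0 else Cmult c2 (V n k n)).
  rewrite (csum_ext N _ (fun n => Cplus (csum N (fun m => if (k =? n)%nat then P n m else RtoC 0))
                                        (csum N (fun m => if (m =? k)%nat then R n else RtoC 0)))).
  2:{ intros n _. rewrite <- csum_plus. apply csum_ext. intros m _. rewrite heps_eval. unfold P, R.
      destruct (Nat.eqb_spec k n); destruct (Nat.eqb_spec m k); destruct (Nat.eqb_spec k m); try lia; subst;
      destruct (G2 _ _); ring. }
  rewrite csum_plus.
  rewrite (csum_ext N (fun n => csum N (fun m => if (k =? n)%nat then P n m else RtoC 0))
                      (fun n => if (k =? n)%nat then csum N (P n) else RtoC 0)).
  2:{ intros n _. destruct (k =? n)%nat. auto. apply csum_zero; auto. }
  rewrite csum_kron.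
  rewrite (csum_ext N (fun n => csum N (fun m => if (m =? k)%nat then R n else RtoC 0))
                      (fun n => if (k <? N)%nat then R n else RtoC 0)).
  2:{ intros n _. apply (csum_kron' N k (fun _ => R n)). }
  rewrite csum_if.
  destruct (k <? N)%nat. 2: ring.
  rewrite <- csum_plus. apply csum_ext. intros m _. unfold P, R.
  unfold G2. rewrite (andb_comm (m =? 0)%nat). destruct ((k =? 0)%nat && (m =? 0)%nat)%bool; ring.
Qed.

Lemma csum_modify N k g v : (k < N)%nat ->
  csum N (fun m => if (m =? k)%nat then v else g m) = Cplus (Cminus (csum N g) (g k)) v.
Proof.
  intros Hk.
  rewrite (csum_ext N _ (fun m => Cplus (g m) (if (m =? k)%nat then Cminus v (g m) else RtoC 0))).
  2:{ intros m _. destruct (m =? k)%nat; ring. }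
  rewrite csum_plus, csum_kron'. destruct (Nat.ltb_spec k N); try lia. ring.
Qed.

Definition Qop (N : nat) (eta : op) : op := osub eta (osum N (fun m => ocomp (eps m m) eta)).

Lemma PS_eval a eta N f k : partial_sum a eta N f k =
  csum N (fun n => csum N (fun m => if G2 n m then RtoC 0 else heps n m (eta (a n m f)) k)).
Proof.
  unfold partial_sum. rewrite osum_eval. apply csum_ext. intros n _. rewrite osum_eval. apply csum_ext.
  intros m _. unfold G2. destruct ((n =? 0)%nat && (m =? 0)%nat)%bool; reflexivity.
Qed.

Lemma RtoC_neg r : RtoC (- r) = Copp (RtoC r).
Proof. Ceq. Qed.

Lemma RtoC_minus r s : RtoC (r - s) = Cminus (RtoC r) (RtoC s).
Proof. Ceq. Qed.

Section Comp.
Variable A : opS.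
Hypothesis hB : bounded_opS A.
Variable d : R.
Variable eta : op.
Hypothesis He : HS eta.

Let T := Tm A.
Let a := amat T d.

Lemma eta_lin2 (p q : C) u v i : l2 u -> l2 v ->
  Cplus (Cmult p (eta u i)) (Cmult q (eta v i)) = eta (vadd (vscal p u) (vscal q v)) i.
Proof.
  intros Hu Hv. rewrite (bop_add _ (proj1 He)), !(bop_scal _ (proj1 He)); auto; try apply l2_vscal; auto.
Qed.

Lemma TL n m f : l2 f -> l2 (T n m f).
Proof. intros. apply (bop_l2 _ (bop_Tm A hB n m)); auto. Qed.

Lemma comb_off k m f : l2 f -> (k <> m)%nat ->
  Cplus (Cmult c1 (eta (a k m f) m)) (Cmult c2 (eta (a m k f) m)) = eta (T k m f) m.
Proof.
  intros Hf Hkm. unfold a, amat.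
  destruct (Nat.eqb_spec k m); try lia. destruct (Nat.eqb_spec m k); try lia.
  unfold oadd, oscal. rewrite eta_lin2; try apply l2_vadd; try apply l2_vscal; try apply TL; auto.
  f_equal. apply functional_extensionality; intros i. unfold vadd, vscal.
  transitivity (Cplus (Cmult (Cmult (RtoC 2) (Cmult c1 c2)) (T k m f i)) (Cmult (Cplus (Cmult c1 c1) (Cmult c2 c2)) (T m k f i))).
  ring. rewrite c12_prod, c12_sq. ring.
Qed.

Lemma comb_diag k f : l2 f -> (k <> 0)%nat ->
  Cplus (Cmult c1 (eta (a k k f) k)) (Cmult c2 (eta (a k k f) k)) =
  Cminus (eta (T k k f) k) (Cmult (RtoC d) (eta (T 0%nat 0%nat f) k)).
Proof.
  intros Hf Hk. unfold a, amat. rewrite Nat.eqb_refl. destruct (Nat.eqb_spec k 0); try lia.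
  unfold oadd, oscal. rewrite (bop_add _ (proj1 He)), (bop_scal _ (proj1 He)); try apply l2_vscal; try apply TL; auto.
  unfold vadd, vscal. transitivity (Cmult (Cplus c1 c2) (Cplus (eta (T k k f) k) (Cmult (RtoC (- d)) (eta (T 0%nat 0%nat f) k)))).
  ring. rewrite c12_sum, RtoC_neg. ring.
Qed.

Lemma b11_eval z k : bop11 d z k = Cplus (Cmult (RtoC d) (z k)) (Cmult (Cmult (RtoC (1 - d)) (z 0%nat)) (e 0 k)).
Proof. reflexivity. Qed.

Definition Dop (N : nat) : op :=
  osub (A eta) (oadd (ocomp (bop11 d) (ocomp eta (a 0%nat 0%nat))) (partial_sum a eta N)).

Lemma comp_formula N f k : (1 <= N)%nat -> l2 f ->
  Dop N f k = if (k <? N)%nat then A (Qop N eta) f k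
              else Cminus (A eta f k) (Cmult (RtoC d) (eta (T 0%nat 0%nat f) k)).
Proof.
  intros HN Hf. unfold Dop, osub, vsub, oadd, vadd, ocomp.
  rewrite PS_eval, dsum, b11_eval.
  assert (Ha00 : a 0%nat 0%nat = T 0%nat 0%nat) by reflexivity. rewrite Ha00.
  set (g := fun m => eta (T k m f) m).
  destruct (Nat.ltb_spec k N) as [HkN|HkN].
  - unfold Qop. rewrite (A_sub A hB); auto. 2: apply HS_osum; intros; apply HS_lcomp; auto; apply bop_eps.
    unfold vsub. rewrite (A_osum A hB); auto. 2: intros; apply HS_lcomp; auto; apply bop_eps.
    rewrite (csum_ext N (fun m => A (ocomp (eps m m) eta) f k) g). 2: { intros m _. unfold g, T. apply kernel; auto. }
    rewrite (csum_ext N _ (fun m => if (m =? k)%nat then (if (k =? 0)%nat then RtoC 0 else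
                 Cminus (g k) (Cmult (RtoC d) (eta (T 0%nat 0%nat f) k))) else g m)).
    2:{ intros m _. destruct (Nat.eqb_spec m k).
        - subst m. unfold G2. destruct (Nat.eqb_spec k 0). subst k. reflexivity.
          replace (G2 k k) with false by (unfold G2; destruct (Nat.eqb_spec k 0); try lia; reflexivity). unfold g. apply comb_diag; auto.
        - replace (G2 k m) with false. apply comb_off; auto.
          unfold G2. destruct (Nat.eqb_spec k 0); destruct (Nat.eqb_spec m 0); try lia; reflexivity. }
    rewrite csum_modify; auto.
    destruct (Nat.eqb_spec k 0).
    + subst k. unfold e. simpl. unfold g. rewrite RtoC_minus. ring.
    + unfold e. destruct (Nat.eqb_spec k 0); try lia. ring.
  - unfold e. destruct (Nat.eqb_spec k 0); try lia. ring.
Qed.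
End Comp.

Lemma zero_series : ex_series (fun _ : nat => 0) /\ Series (fun _ : nat => 0) = 0.
Proof. destruct (Series_fin (fun _ => 0) 0) as [H1 H2]. intros; auto. split; auto. Qed.

Lemma Qop_e N eta j : Qop N eta (e j) = fun k => if (k <? N)%nat then RtoC 0 else eta (e j) k.
Proof.
  apply functional_extensionality; intros k. unfold Qop, osub, vsub. rewrite osum_eval.
  rewrite (csum_ext N _ (fun m => if (k =? m)%nat then eta (e j) m else RtoC 0)).
  2:{ intros m _. unfold ocomp, eps. destruct (Nat.eqb_spec k m); subst; auto. }
  rewrite csum_kron. destruct (Nat.ltb_spec k N); subst; ring.
Qed.

Lemma HS_Qop N eta : HS eta -> HS (Qop N eta).
Proof.
  intros He. unfold Qop. rewrite (osub_eq). apply HS_oadd; auto. apply HS_oscal.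
  apply HS_osum. intros; apply HS_lcomp; auto. apply bop_eps.
Qed.

Lemma nsq_tail v N : nsq (fun k => if (k <? N)%nat then RtoC 0 else v k) = Series (tail (fun k => Cmod (v k) ^ 2) N).
Proof.
  unfold nsq. apply Series_ext. intros k. unfold tail. destruct (k <? N)%nat; auto. rewrite Cmod_0. ring.
Qed.

Lemma hsq_Qop N eta : HS eta -> hsq (Qop N eta) = Series (fun j => Series (tail (fun k => Cmod (eta (e j) k) ^ 2) N)).
Proof.
  intros He. unfold hsq. apply Series_ext. intros j. rewrite Qop_e, norm2_sq, nsq_tail; auto.
  rewrite <- Qop_e. apply (bop_l2 _ (proj1 (HS_Qop N eta He))). apply l2_e.
Qed.

Lemma HS_rows eta : HS eta -> (forall j, ex_series (fun k => Cmod (eta (e j) k) ^ 2)) /\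
   ex_series (fun j => Series (fun k => Cmod (eta (e j) k) ^ 2)).
Proof.
  intros He. split.
  - intros j. apply (bop_l2 _ (proj1 He)). apply l2_e.
  - eapply ex_series_Rext. 2: apply (proj2 He). intros j. cbv beta. rewrite norm2_sq. reflexivity.
    apply (bop_l2 _ (proj1 He)). apply l2_e.
Qed.

Lemma hsq_bound A (hB : bounded_opS A) : exists MA, 0 <= MA /\ forall X, HS X -> hsq (A X) <= MA ^ 2 * hsq X.
Proof.
  destruct (A_bound A hB) as (MA & HMA0 & HMA). exists MA. split; auto. intros X HX.
  rewrite <- !norm_HS_sq; auto. 2: apply A_HS; auto. rewrite <- Rpow_mult_distr.
  apply pow_incr. split. apply norm_HS_ge0. apply HMA; auto.
Qed.

Lemma column_bound A (hB : bounded_opS A) MA eta k : HS eta -> 0 <= MA ->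
  (forall X, HS X -> hsq (A X) <= MA ^ 2 * hsq X) ->
  ex_series (fun j => Cmod (eta (Tm A 0 0 (e j)) k) ^ 2) /\
  Series (fun j => Cmod (eta (Tm A 0 0 (e j)) k) ^ 2) <= MA ^ 2 * Series (fun j => Cmod (eta (e j) k) ^ 2).
Proof.
  intros He HM0 HM.
  set (eta' := ocomp (eps 0 k) eta).
  assert (He' : HS eta') by (apply HS_lcomp; auto; apply bop_eps).
  assert (Hfix : ocomp (eps 0 0) eta' = eta').
  { apply functional_extensionality; intros g. unfold eta', ocomp. rewrite !eps_vb. cbv beta. rewrite vb_eval. reflexivity. }
  assert (Hk : forall j, eta (Tm A 0 0 (e j)) k = A eta' (e j) 0%nat).
  { intros j. rewrite <- Hfix. rewrite kernel; auto; try apply l2_e. }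
  destruct (HS_row (A eta') 0 (A_HS A hB _ He')) as [H1 H2].
  assert (Hh : hsq eta' = Series (fun j => Cmod (eta (e j) k) ^ 2)).
  { unfold hsq. apply Series_ext. intros j. unfold eta', ocomp. rewrite eps_vb. cbv beta. rewrite norm2_vb. auto. }
  split.
  - eapply ex_series_Rext. 2: apply H1. intros j. cbv beta. rewrite Hk. auto.
  - rewrite (Series_ext _ (fun j => Cmod (A eta' (e j) 0%nat) ^ 2)). 2: intros; rewrite Hk; auto.
    rewrite <- Hh. eapply Rle_trans. apply H2. apply HM; auto.
Qed.

Lemma tT_bound A (hB : bounded_opS A) MA eta N : HS eta -> 0 <= MA ->
  (forall X, HS X -> hsq (A X) <= MA ^ 2 * hsq X) ->
  (forall j, ex_series (tail (fun k => Cmod (eta (Tm A 0 0 (e j)) k) ^ 2) N)) /\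
  ex_series (fun j => Series (tail (fun k => Cmod (eta (Tm A 0 0 (e j)) k) ^ 2) N)) /\
  Series (fun j => Series (tail (fun k => Cmod (eta (Tm A 0 0 (e j)) k) ^ 2) N)) <=
  MA ^ 2 * Series (fun j => Series (tail (fun k => Cmod (eta (e j) k) ^ 2) N)).
Proof.
  intros He HM0 HM.
  set (dd := fun j => tail (fun k => Cmod (eta (e j) k) ^ 2) N).
  set (cc := fun j => tail (fun k => Cmod (eta (Tm A 0 0 (e j)) k) ^ 2) N).
  destruct (HS_rows eta He) as [Hr1 Hr2].
  assert (Hdt := dtail (fun j k => Cmod (eta (e j) k) ^ 2) (fun _ _ => pow2_ge_0 _) Hr1 Hr2).
  destruct Hdt as [Hd1 _].
  destruct (swap_le dd) as (Sd1 & Sd2 & Sd3).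
  { intros j k. apply tail_nonneg. intros; apply pow2_ge_0. }
  { intros j. apply tail_ex; auto. }
  { apply Hd1. }
  assert (Hcol : forall k, ex_series (fun j => cc j k) /\ Series (fun j => cc j k) <= MA ^ 2 * Series (fun j => dd j k)).
  { intros k. unfold cc, dd, tail. destruct (k <? N)%nat.
    - destruct zero_series as [Z1 Z2]. split; auto. rewrite Z2. lra.
    - apply column_bound; auto. }
  assert (Hc2 : ex_series (fun k => Series (fun j => cc j k))).
  { apply ex_series_Rle with (fun k => MA ^ 2 * Series (fun j => dd j k)).
    - intros k. split. apply Series_ge0. intros; unfold cc; apply tail_nonneg; intros; apply pow2_ge_0. apply Hcol. apply Hcol.
    - apply ex_series_Rscal; auto. }
  destruct (swap_le (fun k j => cc j k)) as (Sc1 & Sc2 & Sc3).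
  { intros k j. unfold cc. apply tail_nonneg. intros; apply pow2_ge_0. }
  { intros k. apply Hcol. }
  { exact Hc2. }
  split; [|split]; auto.
  eapply Rle_trans. apply Sc3. rewrite <- Series_scal_l.
  eapply Rle_trans. apply Series_le with (b := fun k => MA ^ 2 * Series (fun j => dd j k)).
  - intros k. split. apply Series_ge0. intros; unfold cc; apply tail_nonneg; intros; apply pow2_ge_0. apply Hcol. apply Hcol.
  - apply ex_series_Rscal; auto.
  - rewrite Series_scal_l. rewrite Series_scal_l. apply Rmult_le_compat_l. apply pow2_ge_0. apply Sd3.
Qed.

Lemma Cmod_sub_scal_sq a b d : Cmod (Cminus a (Cmult (RtoC d) b)) ^ 2 <= 2 * Cmod a ^ 2 + 2 * (d ^ 2 * Cmod b ^ 2).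
Proof.
  unfold Cminus. eapply Rle_trans. apply Cmod_plus_sq. rewrite Cmod_opp, Cmod_mult, Cmod_R.
  rewrite Rpow_mult_distr, pow2_abs. lra.
Qed.

Section DL.
Variable A : opS.
Hypothesis hB : bounded_opS A.
Variable d : R.
Variable eta : op.
Hypothesis He : HS eta.

Lemma D_bound MA N : (1 <= N)%nat -> 0 <= MA -> (forall X, HS X -> hsq (A X) <= MA ^ 2 * hsq X) ->
  norm_HS (Dop A d eta N) <= sqrt (MA ^ 2 * Series (fun j => Series (tail (fun k => Cmod (eta (e j) k) ^ 2) N))
     + 2 * Series (fun j => Series (tail (fun k => Cmod (A eta (e j) k) ^ 2) N))
     + 2 * d ^ 2 * (MA ^ 2 * Series (fun j => Series (tail (fun k => Cmod (eta (e j) k) ^ 2) N)))).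
Proof.
  intros HN HM0 HM.
  destruct (tT_bound A hB MA eta N He HM0 HM) as (T1 & T2 & T3).
  assert (HAe : HS (A eta)) by (apply A_HS; auto).
  destruct (HS_rows (A eta) HAe) as [RA1 RA2].
  destruct (dtail (fun j k => Cmod (A eta (e j) k) ^ 2) (fun _ _ => pow2_ge_0 _) RA1 RA2) as [tA_ex _].
  set (Q := Qop N eta). assert (HQ : HS Q) by (apply HS_Qop; auto).
  assert (HAQ : HS (A Q)) by (apply A_HS; auto).
  set (al := fun j k => Cmod (A Q (e j) k) ^ 2).
  set (be := fun j => tail (fun k => Cmod (A eta (e j) k) ^ 2) N).
  set (ga := fun j => tail (fun k => Cmod (eta (Tm A 0 0 (e j)) k) ^ 2) N).
  assert (Hpt : forall j k, 0 <= Cmod (Dop A d eta N (e j) k) ^ 2 <= al j k + 2 * be j k + 2 * d ^ 2 * ga j k).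
  { intros j k. split. apply pow2_ge_0.
    rewrite (comp_formula A hB d eta He N (e j) k HN (l2_e j)). unfold al, be, ga, tail, Q. cbv beta.
    destruct (k <? N)%nat. lra.
    pose proof (pow2_ge_0 (Cmod (A Q (e j) k))). pose proof (pow2_ge_0 d).
    pose proof (Cmod_sub_scal_sq (A eta (e j) k) (eta (Tm A 0 0 (e j)) k) d). nra. }
  assert (Hal : forall j, ex_series (al j)) by (intros j; apply (bop_l2 _ (proj1 HAQ)); apply l2_e).
  assert (Hbe : forall j, ex_series (be j)) by (intros j; apply tail_ex; auto).
  assert (Hrhs : forall j, ex_series (fun k => al j k + 2 * be j k + 2 * d ^ 2 * ga j k)).
  { intros j. apply ex_series_Rplus. apply ex_series_Rplus; auto. apply ex_series_Rscal; auto. apply ex_series_Rscal; apply T1. }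
  assert (HlD : forall j, l2 (Dop A d eta N (e j))).
  { intros j. unfold l2. apply ex_series_Rle with (2 := Hrhs j). auto. }
  assert (Hj : forall j, 0 <= norm2 (Dop A d eta N (e j)) ^ 2 <=
      norm2 (A Q (e j)) ^ 2 + 2 * Series (be j) + 2 * d ^ 2 * Series (ga j)).
  { intros j. split. apply pow2_ge_0. rewrite !norm2_sq; auto. 2: apply (bop_l2 _ (proj1 HAQ)); apply l2_e.
    unfold nsq. eapply Rle_trans. apply Series_le with (2 := Hrhs j). auto.
    assert (E1 : ex_series (fun k => al j k + 2 * be j k)) by (apply ex_series_Rplus; [apply Hal | apply ex_series_Rscal; apply Hbe]).
    assert (E2 : ex_series (fun k => 2 * d ^ 2 * ga j k)) by (apply ex_series_Rscal; apply T1).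
    assert (E3 : ex_series (fun k => 2 * be j k)) by (apply ex_series_Rscal; apply Hbe).
    rewrite Series_plus, Series_plus, !Series_scal_l; [right; reflexivity| first [exact E1 | exact E2 | exact E3 | apply Hal] ..]. }
  assert (HexR : ex_series (fun j => norm2 (A Q (e j)) ^ 2 + 2 * Series (be j) + 2 * d ^ 2 * Series (ga j))).
  { apply ex_series_Rplus. apply ex_series_Rplus. apply HAQ. apply ex_series_Rscal. apply tA_ex.
    apply ex_series_Rscal. apply T2. }
  rewrite norm_HS_eq. apply sqrt_le_1_alt.
  eapply Rle_trans. apply Series_le with (2 := HexR). auto.
  assert (F0 : ex_series (fun j => norm2 (A Q (e j)) ^ 2)) by apply (proj2 HAQ).
  assert (F1 : ex_series (fun j => norm2 (A Q (e j)) ^ 2 + 2 * Series (be j))) by (apply ex_series_Rplus; [exact F0 | apply ex_series_Rscal; apply tA_ex]).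
  assert (F2 : ex_series (fun j => 2 * d ^ 2 * Series (ga j))) by (apply ex_series_Rscal; apply T2).
  assert (F3 : ex_series (fun j => 2 * Series (be j))) by (apply ex_series_Rscal; apply tA_ex).
  rewrite Series_plus, Series_plus, !Series_scal_l; [| first [exact F0 | exact F1 | exact F2 | exact F3] ..].
  fold (hsq (A Q)).
  assert (H1 : hsq (A Q) <= MA ^ 2 * Series (fun j => Series (tail (fun k => Cmod (eta (e j) k) ^ 2) N))).
  { rewrite <- hsq_Qop; auto. }
  unfold be, ga.
  pose proof (pow2_ge_0 d).
  assert (2 * d ^ 2 * Series (fun j => Series (tail (fun k => Cmod (eta (Tm A 0 0 (e j)) k) ^ 2) N)) <=
          2 * d ^ 2 * (MA ^ 2 * Series (fun j => Series (tail (fun k => Cmod (eta (e j) k) ^ 2) N)))).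
  { apply Rmult_le_compat_l. lra. apply T3. }
  lra.
Qed.

Lemma D_lim : is_lim_seq (fun N => norm_HS (Dop A d eta N)) 0.
Proof.
  destruct (hsq_bound A hB) as (MA & HM0 & HM).
  assert (HAe : HS (A eta)) by (apply A_HS; auto).
  destruct (HS_rows (A eta) HAe) as [RA1 RA2].
  destruct (dtail (fun j k => Cmod (A eta (e j) k) ^ 2) (fun _ _ => pow2_ge_0 _) RA1 RA2) as [tA_ex tA_lim].
  destruct (HS_rows eta He) as [R1 R2].
  destruct (dtail (fun j k => Cmod (eta (e j) k) ^ 2) (fun _ _ => pow2_ge_0 _) R1 R2) as [h_ex h_lim].
  set (h := fun N => Series (fun j => Series (tail (fun k => Cmod (eta (e j) k) ^ 2) N))) in *.
  set (tA := fun N => Series (fun j => Series (tail (fun k => Cmod (A eta (e j) k) ^ 2) N))) in *.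
  assert (Hh0 : forall N, 0 <= h N).
  { intros N. apply Series_ge0; auto. intros j. apply Series_ge0. apply tail_nonneg. intros; apply pow2_ge_0.
    apply tail_ex; auto. }
  assert (HtA0 : forall N, 0 <= tA N).
  { intros N. apply Series_ge0; auto. intros j. apply Series_ge0. apply tail_nonneg. intros; apply pow2_ge_0.
    apply tail_ex; auto. }
  apply lim0_squeeze_ev with (fun N => sqrt (MA ^ 2 * h N + 2 * tA N + 2 * d ^ 2 * (MA ^ 2 * h N))) 1%nat.
  - intros N HN. split. apply norm_HS_ge0. apply D_bound; auto.
  - apply sqrt_lim0. intros N. pose proof (pow2_ge_0 MA). pose proof (pow2_ge_0 d).
    specialize (Hh0 N). specialize (HtA0 N).
    assert (0 <= MA ^ 2 * h N) by (apply Rmult_le_pos; auto).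
    assert (0 <= d ^ 2 * (MA ^ 2 * h N)) by (apply Rmult_le_pos; auto). lra.
    replace 0 with (MA ^ 2 * 0 + 2 * 0 + 2 * d ^ 2 * (MA ^ 2 * 0)) by ring.
    apply is_lim_seq_plus'. apply is_lim_seq_plus'.
    apply (is_lim_seq_scal_l _ (MA ^ 2) 0). apply h_lim.
    apply (is_lim_seq_scal_l _ 2 0). apply tA_lim.
    apply (is_lim_seq_scal_l _ (2 * d ^ 2) (MA ^ 2 * 0)). apply (is_lim_seq_scal_l _ (MA ^ 2) 0). apply h_lim.
Qed.
End DL.

Lemma re_le_Cmod' z : Re z <= Cmod z.
Proof. eapply Rle_trans. apply Rle_abs. apply re_le_Cmod. Qed.

Theorem lemma3p15 (A : opS) (hA : posdefS A) :
  exists (b11 : op) (a : nat -> nat -> op),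
    selfadjoint b11 /\ (forall n m, selfadjoint (a n m)) /\
    posdef b11 /\ posdef (a 0%nat 0%nat) /\ posdef (a 1%nat 1%nat) /\
    forall eta : op, HS eta ->
      is_lim_seq
        (fun N => norm_HS
           (osub (A eta)
                 (oadd (ocomp b11 (ocomp eta (a 0%nat 0%nat))) (partial_sum a eta N))))
        0.
Proof.
  pose proof (proj1 hA) as hB.
  destruct (diag_pos A hA) as (c & Hc & Hpos).
  destruct (bop_bound (Tm A 0 0) (bop_Tm A hB 0 0)) as (M0 & HM0 & HM).
  set (d := Rmin (1/2) (c / (2 * (M0 + 1)))).
  assert (Hd1 : d <= 1/2) by apply Rmin_l.
  assert (Hd2 : d <= c / (2 * (M0 + 1))) by apply Rmin_r.
  assert (Hd0 : 0 < d).
  { unfold d. apply Rmin_glb_lt. lra. apply Rdiv_lt_0_compat; lra. }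
  assert (HdM : d * M0 <= c / 2).
  { assert (d * (2 * (M0 + 1)) <= c).
    { apply Rmult_le_compat_r with (r := 2 * (M0 + 1)) in Hd2. 2: lra.
      replace (c / (2 * (M0 + 1)) * (2 * (M0 + 1))) with c in Hd2 by (field; lra). auto. }
    nra. }
  clearbody d.
  destruct (bop11_ok d (conj Hd0 Hd1)) as [Hb1 Hb2].
  assert (Hh : forall n m x y, l2 x -> l2 y -> inner (Tm A n m y) x = inner y (Tm A m n x)).
  { intros n m x y Hx Hy. symmetry. apply herm; auto. }
  exists (bop11 d), (amat (Tm A) d).
  split; [auto|]. split. { intros n m. apply amat_sa; auto. apply bop_Tm; auto. }
  split; [auto|]. split.
  { change (amat (Tm A) d 0 0) with (Tm A 0 0). split. apply bop_Tm; auto.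
    exists c. split; auto. intros x Hx Hn. split. apply diag_real; auto.
    pose proof (Hpos 0%nat x Hx). rewrite <- norm2_sq, Hn in H; auto. lra. }
  split.
  { change (amat (Tm A) d 1 1) with (oadd (Tm A 1 1) (oscal (RtoC (- d)) (Tm A 0 0))).
    split. apply bop_oadd. apply bop_Tm; auto. apply bop_oscal. apply bop_Tm; auto.
    exists (c / 2). split. lra. intros x Hx Hn. unfold oadd, oscal.
    assert (L := fun n m x => bop_l2 _ (bop_Tm A hB n m) x).
    rewrite inner_vadd_r, inner_vscal_r; auto; try apply l2_vscal; auto.
    pose proof (diag_real A hA 1 x Hx) as I1. pose proof (diag_real A hA 0 x Hx) as I0.
    pose proof (Hpos 1%nat x Hx) as P1. rewrite <- norm2_sq, Hn in P1; auto.
    assert (B0 : Re (inner x (Tm A 0 0 x)) <= M0).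
    { eapply Rle_trans. apply re_le_Cmod'. eapply Rle_trans. apply inner_bound; auto.
      rewrite Hn. specialize (HM x Hx). rewrite Hn in HM. lra. }
    set (z1 := inner x (Tm A 1 1 x)) in *. set (z0 := inner x (Tm A 0 0 x)) in *.
    destruct z1 as [r1 i1], z0 as [r0 i0]. unfold Cplus, Cmult, RtoC, Re, Im in *. simpl in *.
    assert (Hdr : d * r0 <= d * M0) by (apply Rmult_le_compat_l; lra).
    split; [rewrite I1, I0; ring | ]. replace (- d * r0 - 0 * i0) with (- (d * r0)) by ring. lra. }
  intros eta He. exact (D_lim A hB d eta He).
Qed.
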